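(* Let $p$ be a polynomial of degree $m$ with $p(t)=dt^m+O(t^{m-1})$, let $q$ be a polynomial of degree $d\ge1$ with $q(t)=t^d+O(t^{d-1})$ as $t\to\infty$, let $c\in\mathbb{C}$ and $g(z)=\int_0^zp(t)e^{q(t)}dt+c$. Let $\lambda=(d-1-m)/d$. Let $R>0$ be such that all critical values of $q$ lie in $D(0,R)$ and $2^{-d}|z|^d\le|q(z)|\le2^d|z|^d$ for $|z|\ge\frac12R^{1/d}$, let $G=\mathbb{C}\setminus(\overline{D(0,R)}\cup[0,\infty))$, let $S$ be any component of $q^{-1}(G)$ and let $\varphi$ be the branch of $q^{-1}$ on $G$ with $\varphi(G)=S$. Then there exists $c_S\in\mathbb{C}$ such that $$g(\varphi(w))=c_S+\frac{p(\varphi(w))}{q'(\varphi(w))}\Big(1+\frac{\lambda}{w}+O\big(|w|^{-1-1/d}\big)\Big)e^{w}$$ as $w\to\infty$ in $G$.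
   Context: $D(z_0,r)$ is the open disk. $q$ maps each component of $q^{-1}(G)$ conformally onto $G$, so $\varphi$ is well defined. *)

(* Defs.v *)
From Stdlib Require Import Reals List.
From Coquelicot Require Import Coquelicot.
Open Scope C_scope.

(* Polynomials as coefficient lists, lowest degree first:
   [a0; a1; ...; an] represents a0 + a1 t + ... + an t^n. *)
Definition Peval (l : list C) (z : C) : C :=
  fold_right (fun a acc => a + z * acc) (RtoC 0) l.

Fixpoint Pderiv_aux (k : nat) (l : list C) : list C :=
  match l with
  | nil => nil
  | a :: l' => (RtoC (INR k) * a) :: Pderiv_aux (S k) l'
  end.
Definition Pderiv (l : list C) : list C :=
  match l with nil => nil | _ :: l' => Pderiv_aux 1 l' end.

Definition Cexp (z : C) : C :=
  (exp (Re z) * cos (Im z), exp (Re z) * sin (Im z))%R.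

Definition CRInt (f : R -> C) (a b : R) : C :=
  (RInt (fun s => Re (f s)) a b, RInt (fun s => Im (f s)) a b).

(* Complex line integral along the straight segment from 0 to z. *)
Definition seg_integral (f : C -> C) (z : C) : C :=
  z * CRInt (fun s => f (RtoC s * z)) 0 1.

Definition connected_set (A : C -> Prop) : Prop :=
  forall U V : C -> Prop, open U -> open V ->
    (forall x, A x -> U x \/ V x) ->
    (forall x, ~ (A x /\ U x /\ V x)) ->
    (exists x, A x /\ U x) -> (exists x, A x /\ V x) -> False.

(* The connected component of A containing x (empty if ~ A x). *)
Definition component (A : C -> Prop) (x : C) : C -> Prop :=
  fun y => exists B : C -> Prop,
    (forall z, B z -> A z) /\ connected_set B /\ B x /\ B y.

(* Main.v *)
Require Import Defs.
From Stdlib Require Import Reals Lra Lia List.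
From Coquelicot Require Import Coquelicot.
Open Scope R_scope.


Definition CD (f : C -> C) (z l : C) : Prop :=
  forall eps, 0 < eps -> exists del, 0 < del /\
    forall h, Cmod h < del -> Cmod (f (z + h) - f z - l * h)%C <= eps * Cmod h.

Definition RD (F : R -> C) (s : R) (l : C) : Prop :=
  forall eps, 0 < eps -> exists del, 0 < del /\
    forall h : R, Rabs h < del -> Cmod (F (s + h)%R - F s - l * RtoC h)%C <= eps * Rabs h.

Lemma Cmod_sub_le (a b : C) : Cmod a - Cmod b <= Cmod (a - b)%C.
Proof.
  assert (H := Cmod_triangle (a - b)%C b).
  replace (a - b + b)%C with a in H by ring. lra.
Qed.

Lemma Cmod_tri3 (a b c : C) : Cmod (a + b + c)%C <= Cmod a + Cmod b + Cmod c.
Proof.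
  eapply Rle_trans; [apply Cmod_triangle|].
  assert (H := Cmod_triangle a b). lra.
Qed.

Lemma CD_eq f z l l' : CD f z l -> l = l' -> CD f z l'.
Proof. intros H ->; exact H. Qed.

Lemma CD_ext f g z l : (forall x, f x = g x) -> CD f z l -> CD g z l.
Proof.
  intros E H eps Heps. destruct (H eps Heps) as [d [Hd Hh]].
  exists d; split; auto. intros h Hh'. rewrite <- !E. auto.
Qed.

Lemma CD_const (c z : C) : CD (fun _ => c) z (RtoC 0).
Proof.
  intros eps Heps. exists 1; split; [lra|]. intros h _.
  replace (c - c - RtoC 0 * h)%C with (RtoC 0) by ring.
  rewrite Cmod_0. apply Rmult_le_pos; [lra|apply Cmod_ge_0].
Qed.

Lemma CD_id (z : C) : CD (fun x => x) z (RtoC 1).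
Proof.
  intros eps Heps. exists 1; split; [lra|]. intros h _.
  replace (z + h - z - RtoC 1 * h)%C with (RtoC 0) by ring.
  rewrite Cmod_0. apply Rmult_le_pos; [lra|apply Cmod_ge_0].
Qed.

Lemma CD_add f g z a b : CD f z a -> CD g z b -> CD (fun x => f x + g x)%C z (a + b)%C.
Proof.
  intros Hf Hg eps Heps.
  destruct (Hf (eps/2)) as [d1 [Hd1 H1]]; [lra|].
  destruct (Hg (eps/2)) as [d2 [Hd2 H2]]; [lra|].
  exists (Rmin d1 d2); split; [apply Rmin_glb_lt; auto|].
  intros h Hh.
  assert (h1 : Cmod h < d1) by (eapply Rlt_le_trans; [exact Hh| apply Rmin_l]).
  assert (h2 : Cmod h < d2) by (eapply Rlt_le_trans; [exact Hh| apply Rmin_r]).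
  specialize (H1 h h1). specialize (H2 h h2).
  replace (f (z + h) + g (z + h) - (f z + g z) - (a + b) * h)%C
    with ((f (z + h) - f z - a * h) + (g (z + h) - g z - b * h))%C by ring.
  eapply Rle_trans; [apply Cmod_triangle|]. lra.
Qed.

Lemma CD_opp f z a : CD f z a -> CD (fun x => - f x)%C z (- a)%C.
Proof.
  intros Hf eps Heps. destruct (Hf eps Heps) as [d [Hd H]].
  exists d; split; auto. intros h Hh.
  replace (- f (z + h) - - f z - - a * h)%C with (- (f (z + h) - f z - a * h))%C by ring.
  rewrite Cmod_opp. auto.
Qed.

Lemma CD_sub f g z a b : CD f z a -> CD g z b -> CD (fun x => f x - g x)%C z (a - b)%C.
Proof.
  intros Hf Hg. apply CD_add; auto. apply CD_opp; auto.
Qed.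

Lemma CD_lip f z a : CD f z a -> exists del, 0 < del /\
  forall h, Cmod h < del -> Cmod (f (z + h) - f z)%C <= (Cmod a + 1) * Cmod h.
Proof.
  intros Hf. destruct (Hf 1) as [d [Hd H]]; [lra|].
  exists d; split; auto. intros h Hh. specialize (H h Hh).
  replace (f (z + h) - f z)%C with ((f (z + h) - f z - a * h) + a * h)%C by ring.
  eapply Rle_trans; [apply Cmod_triangle|]. rewrite Cmod_mult. lra.
Qed.

Lemma CD_mul f g z a b : CD f z a -> CD g z b ->
  CD (fun x => f x * g x)%C z (a * g z + f z * b)%C.
Proof.
  intros Hf Hg eps Heps.
  set (Mg := Cmod (g z) + Cmod b + 1).
  assert (HMg : 0 < Mg) by (unfold Mg; pose proof (Cmod_ge_0 (g z)); pose proof (Cmod_ge_0 b); lra).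
  set (e1 := eps / (3 * Mg)).
  set (e2 := eps / (3 * (Cmod (f z) + 1))).
  assert (He1 : 0 < e1) by (unfold e1; apply Rdiv_lt_0_compat; lra).
  assert (He2 : 0 < e2) by (unfold e2; pose proof (Cmod_ge_0 (f z)); apply Rdiv_lt_0_compat; lra).
  destruct (Hf e1 He1) as [d1 [Hd1 H1]].
  destruct (Hg e2 He2) as [d2 [Hd2 H2]].
  destruct (CD_lip g z b Hg) as [d3 [Hd3 H3]].
  set (d4 := Rmin 1 (eps / (3 * (Cmod a + 1) * (Cmod b + 1)))).
  assert (Hd4 : 0 < d4).
  { unfold d4. pose proof (Cmod_ge_0 a); pose proof (Cmod_ge_0 b).
    apply Rmin_glb_lt; [lra|]. apply Rdiv_lt_0_compat; [lra|].
    apply Rmult_lt_0_compat; lra. }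
  exists (Rmin (Rmin d1 d2) (Rmin d3 d4)); split.
  { apply Rmin_glb_lt; apply Rmin_glb_lt; assumption. }
  intros h Hh.
  assert (h1 : Cmod h < d1) by (eapply Rlt_le_trans; [exact Hh| unfold Rmin; repeat destruct Rle_dec; lra]).
  assert (h2 : Cmod h < d2) by (eapply Rlt_le_trans; [exact Hh| unfold Rmin; repeat destruct Rle_dec; lra]).
  assert (h3 : Cmod h < d3) by (eapply Rlt_le_trans; [exact Hh| unfold Rmin; repeat destruct Rle_dec; lra]).
  assert (h4 : Cmod h < d4) by (eapply Rlt_le_trans; [exact Hh| unfold Rmin; repeat destruct Rle_dec; lra]).
  specialize (H1 h h1). specialize (H2 h h2). specialize (H3 h h3).
  replace (f (z + h) * g (z + h) - f z * g z - (a * g z + f z * b) * h)%C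
    with ((f (z + h) - f z - a * h) * g (z + h) + f z * (g (z + h) - g z - b * h)
          + (a * h) * (g (z + h) - g z))%C by ring.
  eapply Rle_trans; [apply Cmod_tri3|]. rewrite !Cmod_mult.
  assert (Hgz : Cmod (g (z + h)%C) <= Mg).
  { replace (g (z + h)%C) with (g z + (g (z + h) - g z))%C by ring.
    eapply Rle_trans; [apply Cmod_triangle|]. unfold Mg.
    assert (Cmod h <= 1) by (unfold d4 in h4; pose proof (Rmin_l 1 (eps / (3 * (Cmod a + 1) * (Cmod b + 1)))); lra).
    pose proof (Cmod_ge_0 b). pose proof (Cmod_ge_0 h). nra. }
  pose proof (Cmod_ge_0 h). pose proof (Cmod_ge_0 a). pose proof (Cmod_ge_0 b).
  pose proof (Cmod_ge_0 (f z)). pose proof (Cmod_ge_0 (g (z + h) - g z)%C).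
  pose proof (Cmod_ge_0 (f (z + h) - f z - a * h)%C).
  assert (T1 : Cmod (f (z + h) - f z - a * h)%C * Cmod (g (z + h)%C) <= eps / 3 * Cmod h).
  { eapply Rle_trans. apply Rmult_le_compat_l; [auto| exact Hgz].
    eapply Rle_trans. apply Rmult_le_compat_r; [lra| exact H1].
    unfold e1. right. field. lra. }
  assert (T2 : Cmod (f z) * Cmod (g (z + h) - g z - b * h)%C <= eps / 3 * Cmod h).
  { eapply Rle_trans. apply Rmult_le_compat_l; [auto| exact H2].
    unfold e2. replace (Cmod (f z) * (eps / (3 * (Cmod (f z) + 1)) * Cmod h))
      with (eps / 3 * Cmod h * (Cmod (f z) / (Cmod (f z) + 1))) by (field; lra).
    rewrite <- (Rmult_1_r (eps / 3 * Cmod h)) at 2.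
    apply Rmult_le_compat_l. nra. apply Rmult_le_reg_r with (Cmod (f z) + 1); [lra|].
    unfold Rdiv. rewrite Rmult_assoc, Rinv_l; lra. }
  assert (T3 : Cmod a * Cmod h * Cmod (g (z + h) - g z)%C <= eps / 3 * Cmod h).
  { eapply Rle_trans. apply Rmult_le_compat_l; [nra| exact H3].
    assert (H10 : Cmod h <= eps / (3 * (Cmod a + 1) * (Cmod b + 1))) by
      (unfold d4 in h4; pose proof (Rmin_r 1 (eps / (3 * (Cmod a + 1) * (Cmod b + 1)))); lra).
    assert (Cmod h * (3 * (Cmod a + 1) * (Cmod b + 1)) <= eps).
    { apply Rmult_le_reg_r with (/ (3 * (Cmod a + 1) * (Cmod b + 1))).
      apply Rinv_0_lt_compat; nra. rewrite Rmult_assoc, Rinv_r; [|nra].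
      unfold Rdiv in H10. lra. }
    nra. }
  lra.
Qed.

Lemma CD_scal (c : C) f z a : CD f z a -> CD (fun x => c * f x)%C z (c * a)%C.
Proof.
  intros H. eapply CD_eq. apply CD_mul; [apply CD_const|exact H]. cbv beta. ring.
Qed.

Lemma CD_comp f g z a b : CD f z a -> CD g (f z) b -> CD (fun x => g (f x)) z (b * a)%C.
Proof.
  intros Hf Hg eps Heps.
  set (e1 := Rmin 1 (eps / (2 * (Cmod b + 1)))).
  set (e2 := eps / (2 * (Cmod a + 1))).
  pose proof (Cmod_ge_0 a); pose proof (Cmod_ge_0 b).
  assert (He1 : 0 < e1) by (unfold e1; apply Rmin_glb_lt; [lra| apply Rdiv_lt_0_compat; lra]).
  assert (He2 : 0 < e2) by (unfold e2; apply Rdiv_lt_0_compat; lra).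
  destruct (Hf e1 He1) as [d1 [Hd1 H1]].
  destruct (Hg e2 He2) as [d2 [Hd2 H2]].
  exists (Rmin d1 (d2 / (Cmod a + 1))); split.
  { apply Rmin_glb_lt; auto. apply Rdiv_lt_0_compat; lra. }
  intros h Hh.
  assert (h1 : Cmod h < d1) by (eapply Rlt_le_trans; [exact Hh| apply Rmin_l]).
  assert (h2 : Cmod h < d2 / (Cmod a + 1)) by (eapply Rlt_le_trans; [exact Hh| apply Rmin_r]).
  specialize (H1 h h1).
  set (k := (f (z + h) - f z)%C).
  assert (Hk : Cmod k <= (Cmod a + 1) * Cmod h).
  { unfold k. replace (f (z + h) - f z)%C with ((f (z + h) - f z - a * h) + a * h)%C by ring.
    eapply Rle_trans; [apply Cmod_triangle|]. rewrite Cmod_mult.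
    assert (e1 <= 1) by apply Rmin_l. pose proof (Cmod_ge_0 h). nra. }
  assert (Hk2 : Cmod k < d2).
  { eapply Rle_lt_trans; [exact Hk|]. pose proof (Cmod_ge_0 h).
    apply Rmult_lt_compat_l with (r := Cmod a + 1) in h2; [|lra].
    replace ((Cmod a + 1) * (d2 / (Cmod a + 1))) with d2 in h2 by (field; lra). lra. }
  specialize (H2 k Hk2).
  replace (f z + k)%C with (f (z + h)%C) in H2 by (unfold k; ring).
  replace (g (f (z + h)) - g (f z) - b * a * h)%C
    with ((g (f (z + h)) - g (f z) - b * k) + b * (f (z + h) - f z - a * h))%C by (unfold k; ring).
  eapply Rle_trans; [apply Cmod_triangle|]. rewrite Cmod_mult.
  assert (A1 : e2 * Cmod k <= eps / 2 * Cmod h).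
  { eapply Rle_trans. apply Rmult_le_compat_l; [lra|exact Hk].
    unfold e2. right. field. lra. }
  assert (A2 : Cmod b * Cmod (f (z + h) - f z - a * h)%C <= eps / 2 * Cmod h).
  { eapply Rle_trans. apply Rmult_le_compat_l; [lra|exact H1].
    assert (e1 <= eps / (2 * (Cmod b + 1))) by apply Rmin_r.
    pose proof (Cmod_ge_0 h).
    assert (Cmod b * e1 <= eps / 2).
    { apply Rle_trans with (Cmod b * (eps / (2 * (Cmod b + 1)))). nra.
      replace (Cmod b * (eps / (2 * (Cmod b + 1)))) with (eps / 2 * (Cmod b / (Cmod b + 1))) by (field; lra).
      rewrite <- (Rmult_1_r (eps/2)) at 2. apply Rmult_le_compat_l; [lra|].
      apply Rmult_le_reg_r with (Cmod b + 1); [lra|]. unfold Rdiv. rewrite Rmult_assoc, Rinv_l; lra. }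
    nra. }
  lra.
Qed.

Lemma CD_Cinv (w : C) : w <> RtoC 0 -> CD (fun x => / x)%C w (- / (w * w))%C.
Proof.
  intros Hw eps Heps.
  assert (Hm : 0 < Cmod w) by (apply Cmod_gt_0; auto).
  exists (Rmin (Cmod w / 2) (eps * Cmod w ^ 3 / 2)); split.
  { apply Rmin_glb_lt; [lra|]. apply Rdiv_lt_0_compat; [|lra]. apply Rmult_lt_0_compat; [lra|]. apply pow_lt; lra. }
  intros h Hh.
  assert (h1 : Cmod h < Cmod w / 2) by (eapply Rlt_le_trans; [exact Hh| apply Rmin_l]).
  assert (h2 : Cmod h < eps * Cmod w ^ 3 / 2) by (eapply Rlt_le_trans; [exact Hh| apply Rmin_r]).
  assert (Hwh : Cmod w / 2 <= Cmod (w + h)%C).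
  { pose proof (Cmod_sub_le w (-h)%C). rewrite Cmod_opp in H.
    replace (w - - h)%C with (w + h)%C in H by ring. lra. }
  assert (Hwh0 : (w + h)%C <> RtoC 0).
  { intro E. rewrite E, Cmod_0 in Hwh. lra. }
  replace (/ (w + h) - / w - - / (w * w) * h)%C with (h * h / (w * w * (w + h)))%C.
  2:{ field. split; auto. }
  rewrite Cmod_div. 2:{ apply Cmult_neq_0; [apply Cmult_neq_0|]; auto. }
  rewrite !Cmod_mult.
  pose proof (Cmod_ge_0 h).
  apply Rle_trans with (Cmod h * Cmod h / (Cmod w * Cmod w * (Cmod w / 2))).
  { unfold Rdiv. apply Rmult_le_compat_l; [nra|]. apply Rinv_le_contravar.
    apply Rmult_lt_0_compat; [nra|lra]. apply Rmult_le_compat_l; [nra|lra]. }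
  apply Rle_trans with (Cmod h * (eps * Cmod w ^ 3 / 2) / (Cmod w * Cmod w * (Cmod w / 2))).
  { unfold Rdiv. apply Rmult_le_compat_r. left; apply Rinv_0_lt_compat; apply Rmult_lt_0_compat; [nra|lra].
    apply Rmult_le_compat_l; lra. }
  right. field. lra.
Qed.

Lemma CD_inv f z a : CD f z a -> f z <> RtoC 0 ->
  CD (fun x => / f x)%C z (- a / (f z * f z))%C.
Proof.
  intros Hf Hz. eapply CD_eq. eapply CD_comp; [exact Hf|]. apply CD_Cinv; auto.
  field. auto.
Qed.

Lemma CD_div f g z a b : CD f z a -> CD g z b -> g z <> RtoC 0 ->
  CD (fun x => f x / g x)%C z ((a * g z - f z * b) / (g z * g z))%C.
Proof.
  intros Hf Hg Hz. eapply CD_eq. apply CD_mul; [exact Hf| apply CD_inv; eauto].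
  cbv beta. field. auto.
Qed.

Open Scope R_scope.


Lemma Rabs_sq r : Rabs r * Rabs r = r * r.
Proof. rewrite <- Rabs_mult. apply Rabs_pos_eq. nra. Qed.

Lemma Cmod_le_sum c : Cmod c <= Rabs (Re c) + Rabs (Im c).
Proof.
  pose proof (Cmod2_alt c). pose proof (Cmod_ge_0 c).
  pose proof (Rabs_sq (Re c)). pose proof (Rabs_sq (Im c)).
  pose proof (Rabs_pos (Re c)). pose proof (Rabs_pos (Im c)).
  simpl in H. nra.
Qed.

Lemma Im_le_Cmod c : Rabs (Im c) <= Cmod c.
Proof.
  pose proof (Cmod2_alt c). pose proof (Cmod_ge_0 c).
  pose proof (Rabs_sq (Im c)). pose proof (Rabs_pos (Im c)). simpl in H. nra.
Qed.

Lemma Re_le_Cmod c : Rabs (Re c) <= Cmod c.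
Proof. apply re_le_Cmod. Qed.

Lemma deriv_bound f x l : derivable_pt_lim f x l ->
  forall eps, 0 < eps -> exists del, 0 < del /\
   forall h, Rabs h < del -> Rabs (f (x + h) - f x - l * h) <= eps * Rabs h.
Proof.
  intros H eps Heps. destruct (H eps Heps) as [d Hd].
  exists d; split; [apply cond_pos|]. intros h Hh.
  destruct (Req_dec h 0) as [->|Hn].
  { rewrite Rplus_0_r. replace (f x - f x - l * 0) with 0 by ring. rewrite !Rabs_R0. lra. }
  specialize (Hd h Hn Hh).
  replace (f (x + h) - f x - l * h) with (((f (x + h) - f x) / h - l) * h) by (field; auto).
  rewrite Rabs_mult. apply Rmult_le_compat_r; [apply Rabs_pos| lra].
Qed.

Lemma Cexp_add a b : Cexp (a + b)%C = (Cexp a * Cexp b)%C.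
Proof.
  destruct a as [x1 y1]; destruct b as [x2 y2]. unfold Cexp, Cmult, Cplus; simpl.
  rewrite exp_plus, cos_plus, sin_plus. f_equal; ring.
Qed.

Lemma Cmod_Cexp z : Cmod (Cexp z) = exp (Re z).
Proof.
  destruct z as [x y]. unfold Cexp, Cmod; cbn [fst snd Re Im].
  replace ((exp x * cos y) ^ 2 + (exp x * sin y) ^ 2) with (exp x * exp x).
  - apply sqrt_square. left; apply exp_pos.
  - pose proof (sin2_cos2 y). unfold Rsqr in H. nra.
Qed.

Lemma Cexp_nz z : Cexp z <> RtoC 0.
Proof.
  intro E. pose proof (Cmod_Cexp z). rewrite E, Cmod_0 in H.
  pose proof (exp_pos (Re z)). lra.
Qed.

Lemma Cexp_small : forall eps, 0 < eps -> exists del, 0 < del /\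
  forall h, Cmod h < del -> Cmod (Cexp h - 1 - h)%C <= eps * Cmod h.
Proof.
  intros eps Heps. set (e := eps / 5).
  assert (He : 0 < e) by (unfold e; lra).
  destruct (deriv_bound _ _ _ (derivable_pt_lim_exp 0) e He) as [d1 [Hd1 H1]].
  destruct (deriv_bound _ _ _ (derivable_pt_lim_exp 0) 1 ltac:(lra)) as [d1' [Hd1' H1']].
  destruct (deriv_bound _ _ _ (derivable_pt_lim_cos 0) (e/2) ltac:(lra)) as [d2 [Hd2 H2]].
  destruct (deriv_bound _ _ _ (derivable_pt_lim_sin 0) e He) as [d3 [Hd3 H3]].
  destruct (deriv_bound _ _ _ (derivable_pt_lim_sin 0) 1 ltac:(lra)) as [d3' [Hd3' H3']].
  rewrite exp_0 in H1, H1'. rewrite sin_0, cos_0 in H2. rewrite cos_0, sin_0 in H3, H3'.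
  exists (Rmin (Rmin (Rmin d1 d1') (Rmin d2 d3)) (Rmin (Rmin d3' 1) (e/4))). split.
  { repeat apply Rmin_glb_lt; lra. }
  intros [x y] Hh.
  pose proof (Re_le_Cmod (x, y)) as Hx. pose proof (Im_le_Cmod (x, y)) as Hy. simpl in Hx, Hy.
  assert (Hm : forall a b c d f g, Cmod (x,y) < Rmin (Rmin (Rmin a b) (Rmin c d)) (Rmin (Rmin f g) (e/4)) ->
     Cmod (x,y) < a /\ Cmod (x,y) < b /\ Cmod (x,y) < c /\ Cmod (x,y) < d /\ Cmod (x,y) < f /\ Cmod (x,y) < g /\ Cmod (x,y) < e/4).
  { intros. unfold Rmin in H; repeat destruct Rle_dec; repeat split; lra. }
  destruct (Hm _ _ _ _ _ _ Hh) as (hd1 & hd1' & hd2 & hd3 & hd3' & h1 & he).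
  assert (ax : Rabs x < d1) by lra. assert (ax' : Rabs x < d1') by lra.
  assert (ay2 : Rabs y < d2) by lra. assert (ay3 : Rabs y < d3) by lra. assert (ay3' : Rabs y < d3') by lra.
  specialize (H1 x ax). specialize (H1' x ax'). specialize (H2 y ay2). specialize (H3 y ay3). specialize (H3' y ay3').
  rewrite !Rplus_0_l in H1, H1', H2, H3, H3'.
  eapply Rle_trans; [apply Cmod_le_sum|]. unfold Cexp, Cminus, Cplus, Copp; simpl.
  pose proof (COS_bound y). pose proof (Rabs_pos x). pose proof (Rabs_pos y).
  assert (Hre : Rabs (exp x * cos y + - (1) + - x) <= e * Rabs x + e * Rabs y).
  { replace (exp x * cos y + - (1) + - x) with ((exp x - 1 - 1 * x) * cos y + (1 + x) * (cos y - 1 - - 0 * y)) by ring.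
    eapply Rle_trans; [apply Rabs_triang|]. rewrite !Rabs_mult.
    assert (Rabs (cos y) <= 1) by (apply Rabs_le; lra).
    assert (Rabs (1 + x) <= 2) by (eapply Rle_trans; [apply Rabs_triang|]; rewrite Rabs_R1; lra).
    pose proof (Rabs_pos (exp x - 1 - 1 * x)). pose proof (Rabs_pos (cos y - 1 - - 0 * y)).
    nra. }
  assert (Him : Rabs (exp x * sin y + - 0 + - y) <= e * Rabs y + e * Rabs y).
  { replace (exp x * sin y + - 0 + - y) with ((exp x - 1) * sin y + (sin y - 0 - 1 * y)) by ring.
    eapply Rle_trans; [apply Rabs_triang|]. rewrite !Rabs_mult.
    assert (Rabs (sin y) <= 2 * Rabs y).
    { replace (sin y) with ((sin y - 0 - 1 * y) + y) by ring.
      eapply Rle_trans; [apply Rabs_triang|]. lra. }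
    assert (Rabs (exp x - 1) <= e / 2).
    { replace (exp x - 1) with ((exp x - 1 - 1 * x) + x) by ring.
      eapply Rle_trans; [apply Rabs_triang|]. lra. }
    pose proof (Rabs_pos (exp x - 1)). pose proof (Rabs_pos (sin y)).
    assert (Rabs (exp x - 1) * Rabs (sin y) <= e / 2 * (2 * Rabs y)) by (apply Rmult_le_compat; auto).
    lra. }
  assert (e * Rabs x <= e * Cmod (x,y)) by (apply Rmult_le_compat_l; lra).
  assert (e * Rabs y <= e * Cmod (x,y)) by (apply Rmult_le_compat_l; lra).
  assert (eps * Cmod (x,y) = 5 * (e * Cmod (x,y))) by (unfold e; field). assert (0 <= e * Cmod (x,y)) by (apply Rmult_le_pos; [lra|apply Cmod_ge_0]). lra.
Qed.

Lemma CD_Cexp z : CD Cexp z (Cexp z).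
Proof.
  intros eps Heps.
  pose proof (Cmod_ge_0 (Cexp z)).
  destruct (Cexp_small (eps / (Cmod (Cexp z) + 1))) as [d [Hd H1]].
  { apply Rdiv_lt_0_compat; lra. }
  exists d; split; auto. intros h Hh.
  rewrite Cexp_add.
  replace (Cexp z * Cexp h - Cexp z - Cexp z * h)%C with (Cexp z * (Cexp h - 1 - h))%C by ring.
  rewrite Cmod_mult. specialize (H1 h Hh). pose proof (Cmod_ge_0 h).
  eapply Rle_trans. apply Rmult_le_compat_l; [lra|exact H1].
  replace (Cmod (Cexp z) * (eps / (Cmod (Cexp z) + 1) * Cmod h)) with
    (eps * Cmod h * (Cmod (Cexp z) / (Cmod (Cexp z) + 1))) by (field; lra).
  rewrite <- (Rmult_1_r (eps * Cmod h)) at 2. apply Rmult_le_compat_l; [nra|].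
  apply Rmult_le_reg_r with (Cmod (Cexp z) + 1); [lra|]. unfold Rdiv. rewrite Rmult_assoc, Rinv_l; lra.
Qed.

Lemma Peval_cons a l z : Peval (a :: l) z = (a + z * Peval l z)%C.
Proof. reflexivity. Qed.
Lemma Peval_nil z : Peval nil z = RtoC 0.
Proof. reflexivity. Qed.

Lemma Pderiv_aux_eval k l z :
  Peval (Pderiv_aux k l) z = (RtoC (INR k) * Peval l z + z * Peval (Pderiv l) z)%C.
Proof.
  revert k. induction l as [|a l IH]; intros k.
  - change (RtoC 0 = (RtoC (INR k) * RtoC 0 + z * RtoC 0)%C). ring.
  - change (Pderiv_aux k (a :: l)) with ((RtoC (INR k) * a)%C :: Pderiv_aux (S k) l).
    change (Pderiv (a :: l)) with (Pderiv_aux 1 l).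
    rewrite !Peval_cons. rewrite (IH (S k)), (IH 1%nat). rewrite S_INR. simpl (INR 1).
    rewrite RtoC_plus. ring.
Qed.

Lemma CD_Peval l z : CD (Peval l) z (Peval (Pderiv l) z).
Proof.
  induction l as [|a l IH].
  - eapply CD_ext; [| apply (CD_const (RtoC 0))]. intros; reflexivity.
  - eapply CD_ext. { intros x. symmetry. apply Peval_cons. }
    eapply CD_eq. apply CD_add; [apply CD_const| apply CD_mul; [apply CD_id|exact IH]].
    change (Pderiv (a :: l)) with (Pderiv_aux 1 l). rewrite Pderiv_aux_eval. simpl (INR 1). cbv beta. ring.
Qed.

Lemma Pderiv_aux_length k l : length (Pderiv_aux k l) = length l.
Proof. revert k; induction l; simpl; auto. Qed.

Lemma Pderiv_length l : length (Pderiv l) = pred (length l).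
Proof. destruct l; simpl; auto. apply Pderiv_aux_length. Qed.

Lemma Pderiv_aux_nth k l j : nth j (Pderiv_aux k l) (RtoC 0) = (RtoC (INR (k + j)) * nth j l (RtoC 0))%C.
Proof.
  revert k j; induction l as [|a l IH]; intros k j.
  - destruct j; simpl; ring.
  - destruct j; simpl.
    + rewrite Nat.add_0_r. reflexivity.
    + rewrite IH. f_equal. f_equal. f_equal. lia.
Qed.

Lemma Pderiv_nth l j : nth j (Pderiv l) (RtoC 0) = (RtoC (INR (S j)) * nth (S j) l (RtoC 0))%C.
Proof.
  destruct l as [|a l].
  - simpl. destruct j; simpl; ring.
  - unfold Pderiv. rewrite Pderiv_aux_nth. reflexivity.
Qed.

Lemma CD_line F a b s l : CD F (a + RtoC s * b)%C l ->
  RD (fun s => F (a + RtoC s * b)%C) s (l * b)%C.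
Proof.
  intros H eps Heps. pose proof (Cmod_ge_0 b).
  destruct (H (eps / (Cmod b + 1))) as [d [Hd H1]]; [apply Rdiv_lt_0_compat; lra|].
  exists (d / (Cmod b + 1)); split; [apply Rdiv_lt_0_compat; lra|].
  intros h Hh.
  assert (Hc : Cmod (RtoC h * b)%C < d).
  { rewrite Cmod_mult, Cmod_R. apply Rmult_lt_compat_r with (r := Cmod b + 1) in Hh; [|lra].
    replace (d / (Cmod b + 1) * (Cmod b + 1)) with d in Hh by (field; lra).
    pose proof (Rabs_pos h). nra. }
  specialize (H1 _ Hc).
  replace (a + RtoC (s + h) * b)%C with (a + RtoC s * b + RtoC h * b)%C by (rewrite RtoC_plus; ring).
  replace (l * b * RtoC h)%C with (l * (RtoC h * b))%C by ring.
  eapply Rle_trans; [exact H1|]. rewrite Cmod_mult, Cmod_R.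
  pose proof (Rabs_pos h).
  replace (eps / (Cmod b + 1) * (Rabs h * Cmod b)) with (eps * Rabs h * (Cmod b / (Cmod b + 1))) by (field; lra).
  rewrite <- (Rmult_1_r (eps * Rabs h)) at 2. apply Rmult_le_compat_l; [nra|].
  apply Rmult_le_reg_r with (Cmod b + 1); [lra|]. unfold Rdiv. rewrite Rmult_assoc, Rinv_l; lra.
Qed.

Lemma RD_re F s l (w : C) : RD F s l ->
  derivable_pt_lim (fun s => Re (w * F s)%C) s (Re (w * l)%C).
Proof.
  intros H eps Heps. pose proof (Cmod_ge_0 w).
  destruct (H (eps / (2 * (Cmod w + 1)))) as [d [Hd H1]]; [apply Rdiv_lt_0_compat; lra|].
  exists (mkposreal d Hd). intros h Hh0 Hh. simpl in Hh.
  specialize (H1 h Hh).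
  replace ((Re (w * F (s + h)) - Re (w * F s)) / h - Re (w * l))
    with (Re (w * (F (s + h)%R - F s - l * RtoC h))%C / h).
  2:{ destruct w as [w1 w2]; destruct (F (s + h)%R) as [a1 a2]; destruct (F s) as [b1 b2]; destruct l as [l1 l2]. unfold Cmult, Cminus, Cplus, Copp, RtoC, Re; simpl. field. auto. }
  unfold Rdiv. rewrite Rabs_mult, Rabs_inv.
  apply Rle_lt_trans with (Cmod w * (eps / (2 * (Cmod w + 1)) * Rabs h) * / Rabs h).
  { apply Rmult_le_compat_r. left; apply Rinv_0_lt_compat, Rabs_pos_lt; auto.
    eapply Rle_trans; [apply Re_le_Cmod|]. rewrite Cmod_mult. apply Rmult_le_compat_l; auto. }
  assert (0 < Rabs h) by (apply Rabs_pos_lt; auto).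
  replace (Cmod w * (eps / (2 * (Cmod w + 1)) * Rabs h) * / Rabs h) with (eps / 2 * (Cmod w / (Cmod w + 1))) by (field; lra).
  assert (Cmod w / (Cmod w + 1) < 1).
  { apply Rmult_lt_reg_r with (Cmod w + 1); [lra|]. unfold Rdiv. rewrite Rmult_assoc, Rinv_l; lra. }
  assert (0 <= Cmod w / (Cmod w + 1)) by (apply Rdiv_le_0_compat; lra).
  nra.
Qed.

Lemma MVI (F F' : R -> C) (beta beta' : R -> R) a b : a <= b ->
  (forall s, a <= s <= b -> RD F s (F' s)) ->
  (forall s, a <= s <= b -> derivable_pt_lim beta s (beta' s)) ->
  (forall s, a <= s <= b -> Cmod (F' s) <= beta' s) ->
  Cmod (F b - F a)%C <= beta b - beta a.
Proof.
  intros Hab HF Hb Hbd.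
  destruct (Req_dec a b) as [<-|Hab'].
  { replace (F a - F a)%C with (RtoC 0) by ring. rewrite Cmod_0. lra. }
  set (v := (F b - F a)%C).
  set (w := if Ceq_dec v (RtoC 0) then RtoC 0 else (Cconj v / RtoC (Cmod v))%C).
  assert (Hw : Re (w * v)%C = Cmod v /\ Cmod w <= 1).
  { unfold w. destruct (Ceq_dec v (RtoC 0)) as [E|E].
    - rewrite E. split; [|rewrite Cmod_0; lra]. rewrite Cmult_0_l, Cmod_0. reflexivity.
    - assert (Hv : 0 < Cmod v) by (apply Cmod_gt_0; auto).
      split.
      + replace (Cconj v / RtoC (Cmod v) * v)%C with (RtoC (/ Cmod v) * (v * Cconj v))%C.
        2:{ rewrite RtoC_inv by lra. unfold Cdiv. ring. }
        rewrite <- Cmod2_conj. rewrite <- RtoC_mult. rewrite re_RtoC. field. lra.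
      + rewrite Cmod_div, Cmod_conj, Cmod_R, Rabs_pos_eq; [|lra| intro X; apply RtoC_inj in X; lra].
        right; field; lra. }
  destruct Hw as [Hw1 Hw2].
  set (psi := fun s => Re (w * F s)%C - beta s).
  destruct (MVT_cor2 psi (fun s => Re (w * F' s)%C - beta' s) a b) as [c [Hc Hc2]]; [lra| |].
  { intros c Hc. unfold psi. apply derivable_pt_lim_minus; [apply RD_re; auto| auto]. }
  assert (Hle : Re (w * F' c)%C - beta' c <= 0).
  { eapply Rle_trans with (Cmod (w * F' c)%C - beta' c).
    - pose proof (Re_le_Cmod (w * F' c)%C). apply Rabs_le_between in H. lra.
    - rewrite Cmod_mult. assert (Cmod (F' c) <= beta' c) by (apply Hbd; lra).
      pose proof (Cmod_ge_0 (F' c)). pose proof (Cmod_ge_0 w). nra. }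
  unfold psi in Hc.
  assert (Re (w * F b)%C - Re (w * F a)%C = Re (w * v)%C).
  { unfold v. destruct w as [w1 w2]; destruct (F b) as [a1 a2]; destruct (F a) as [b1 b2]. unfold Cmult, Cminus, Cplus, Copp, Re; simpl. ring. }
  nra.
Qed.

Open Scope R_scope.


Lemma RD_ext F G s l : (forall t, F t = G t) -> RD F s l -> RD G s l.
Proof.
  intros E H eps Heps. destruct (H eps Heps) as [d [Hd H1]]. exists d; split; auto.
  intros h Hh. rewrite <- !E. auto.
Qed.

Lemma CD_real F s l : CD F (RtoC s) l -> RD (fun s => F (RtoC s)) s l.
Proof.
  intros H.
  assert (H' : CD F (RtoC 0 + RtoC s * RtoC 1)%C l).
  { replace (RtoC 0 + RtoC s * RtoC 1)%C with (RtoC s) by ring. exact H. }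
  apply CD_line in H'. eapply RD_ext; [| replace l with (l * RtoC 1)%C by ring; exact H'].
  intros t. cbv beta. f_equal. ring.
Qed.

Lemma RD_cont_re F s l : RD F s l -> continuous (fun s => Re (F s)) s.
Proof.
  intros H. apply (RD_re F s l (RtoC 1)) in H.
  apply continuity_pt_filterlim.
  assert (Hc : continuity_pt (fun s => Re (RtoC 1 * F s)%C) s).
  { apply derivable_continuous_pt. exists (Re (RtoC 1 * l)%C). exact H. }
  intros eps Heps. destruct (Hc eps Heps) as [d [Hd H2]]. exists d; split; auto.
  intros x Hx. specialize (H2 x Hx). rewrite !Cmult_1_l in H2. exact H2.
Qed.

Lemma Im_as_Re z : Im z = Re (- Ci * z)%C.
Proof. destruct z as [a b]. unfold Ci, Cmult, Copp, Re, Im; simpl. ring. Qed.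

Lemma RD_cont_im F s l : RD F s l -> continuous (fun s => Im (F s)) s.
Proof.
  intros H. apply (RD_re F s l (- Ci)%C) in H.
  apply continuity_pt_filterlim.
  assert (Hc : continuity_pt (fun s => Re (- Ci * F s)%C) s).
  { apply derivable_continuous_pt. exists (Re (- Ci * l)%C). exact H. }
  intros eps Heps. destruct (Hc eps Heps) as [d [Hd H2]]. exists d; split; auto.
  intros x Hx. specialize (H2 x Hx). rewrite !(Im_as_Re (F _)). exact H2.
Qed.

Definition exRI (F : R -> C) a b := ex_RInt (fun s => Re (F s)) a b /\ ex_RInt (fun s => Im (F s)) a b.

Lemma exRI_RD F a b : (forall s, exists l, RD F s l) -> exRI F a b.
Proof.
  intros H. split; apply (ex_RInt_continuous (V:=R_CompleteNormedModule)); intros z _; destruct (H z) as [l Hl].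
  - eapply RD_cont_re; eauto.
  - eapply RD_cont_im; eauto.
Qed.

Lemma exRI_CD F a b : (forall s : R, exists l, CD F (RtoC s) l) -> exRI (fun s => F (RtoC s)) a b.
Proof.
  intros H. apply exRI_RD. intros s. destruct (H s) as [l Hl]. exists l. apply CD_real; auto.
Qed.

Lemma CRInt_ext F G a b : (forall s, F s = G s) -> CRInt F a b = CRInt G a b.
Proof.
  intros E. unfold CRInt. f_equal; apply RInt_ext; intros; rewrite E; reflexivity.
Qed.

Lemma RInt_plus' f g a b : ex_RInt f a b -> ex_RInt g a b -> RInt (fun x => f x + g x) a b = RInt f a b + RInt g a b.
Proof. intros. apply (RInt_plus (V:=R_CompleteNormedModule)); auto. Qed.
Lemma RInt_minus' f g a b : ex_RInt f a b -> ex_RInt g a b -> RInt (fun x => f x - g x) a b = RInt f a b - RInt g a b.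
Proof. intros. apply (RInt_minus (V:=R_CompleteNormedModule)); auto. Qed.
Lemma RInt_scal' f a b k : ex_RInt f a b -> RInt (fun x => k * f x) a b = k * RInt f a b.
Proof. intros. apply (RInt_scal (V:=R_CompleteNormedModule)); auto. Qed.
Lemma ex_RInt_plus' f g a b : ex_RInt f a b -> ex_RInt g a b -> ex_RInt (fun x => f x + g x) a b.
Proof. intros. apply (ex_RInt_plus (V:=R_NormedModule)); auto. Qed.
Lemma ex_RInt_minus' f g a b : ex_RInt f a b -> ex_RInt g a b -> ex_RInt (fun x => f x - g x) a b.
Proof. intros. apply (ex_RInt_minus (V:=R_NormedModule)); auto. Qed.
Lemma ex_RInt_scal' f a b k : ex_RInt f a b -> ex_RInt (fun x => k * f x) a b.
Proof. intros. apply (ex_RInt_scal (V:=R_NormedModule)); auto. Qed.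

Lemma CRInt_plus F G a b : exRI F a b -> exRI G a b ->
  CRInt (fun s => F s + G s)%C a b = (CRInt F a b + CRInt G a b)%C.
Proof.
  intros [F1 F2] [G1 G2]. unfold CRInt.
  rewrite (RInt_ext (fun s => Re (F s + G s)%C) (fun s => Re (F s) + Re (G s))) by (intros; reflexivity).
  rewrite (RInt_ext (fun s => Im (F s + G s)%C) (fun s => Im (F s) + Im (G s))) by (intros; reflexivity).
  rewrite !RInt_plus' by auto. reflexivity.
Qed.

Lemma CRInt_scal (c : C) F a b : exRI F a b ->
  CRInt (fun s => c * F s)%C a b = (c * CRInt F a b)%C.
Proof.
  intros [F1 F2]. unfold CRInt.
  rewrite (RInt_ext (fun s => Re (c * F s)%C) (fun s => Re c * Re (F s) - Im c * Im (F s))).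
  2:{ intros. rewrite re_mult. reflexivity. }
  rewrite (RInt_ext (fun s => Im (c * F s)%C) (fun s => Re c * Im (F s) + Im c * Re (F s))).
  2:{ intros. destruct c; destruct (F x); unfold Cmult, Im, Re; simpl. ring. }
  rewrite RInt_minus' by (apply ex_RInt_scal'; auto).
  rewrite RInt_plus' by (apply ex_RInt_scal'; auto).
  rewrite !RInt_scal' by auto.
  destruct c as [c1 c2]. unfold Cmult; simpl. f_equal; ring.
Qed.

Lemma exRI_plus F G a b : exRI F a b -> exRI G a b -> exRI (fun s => F s + G s)%C a b.
Proof.
  intros [F1 F2] [G1 G2]. split.
  - eapply ex_RInt_ext; [| apply (ex_RInt_plus' _ _ _ _ F1 G1)]. intros; reflexivity.
  - eapply ex_RInt_ext; [| apply (ex_RInt_plus' _ _ _ _ F2 G2)]. intros; reflexivity.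
Qed.

Lemma exRI_scal c F a b : exRI F a b -> exRI (fun s => c * F s)%C a b.
Proof.
  intros [F1 F2]. split.
  - eapply ex_RInt_ext; [| apply (ex_RInt_minus' _ _ _ _ (ex_RInt_scal' _ _ _ (Re c) F1) (ex_RInt_scal' _ _ _ (Im c) F2))].
    intros. rewrite re_mult. reflexivity.
  - eapply ex_RInt_ext; [| apply (ex_RInt_plus' _ _ _ _ (ex_RInt_scal' _ _ _ (Re c) F2) (ex_RInt_scal' _ _ _ (Im c) F1))].
    intros. destruct c; destruct (F x); unfold Cmult, Im, Re; simpl. ring.
Qed.

Lemma CRInt_bound F M : exRI F 0 1 -> (forall s, 0 <= s <= 1 -> Cmod (F s) <= M) ->
  Cmod (CRInt F 0 1) <= 2 * M.
Proof.
  intros [F1 F2] HM. eapply Rle_trans; [apply Cmod_le_sum|]. unfold CRInt; simpl.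
  assert (A1 : Rabs (RInt (fun s => Re (F s)) 0 1) <= (1 - 0) * M).
  { apply abs_RInt_le_const; auto; [lra|]. intros t Ht. eapply Rle_trans; [apply Re_le_Cmod| auto]. }
  assert (A2 : Rabs (RInt (fun s => Im (F s)) 0 1) <= (1 - 0) * M).
  { apply abs_RInt_le_const; auto; [lra|]. intros t Ht. eapply Rle_trans; [apply Im_le_Cmod| auto]. }
  lra.
Qed.

Lemma is_RInt_derive' (f df : R -> R) a b :
  (forall x, Rmin a b <= x <= Rmax a b -> is_derive f x (df x)) ->
  (forall x, Rmin a b <= x <= Rmax a b -> continuous df x) ->
  is_RInt df a b (f b - f a).
Proof. intros. apply (is_RInt_derive (V:=R_CompleteNormedModule)); auto. Qed.

Lemma RInt_unique' (f : R -> R) a b l : is_RInt f a b l -> RInt f a b = l.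
Proof. intros. apply (is_RInt_unique (V:=R_CompleteNormedModule)); auto. Qed.

Lemma CRInt_FTC (Phi F : R -> C) a b : a <= b ->
  (forall s, a <= s <= b -> RD Phi s (F s)) ->
  (forall s, a <= s <= b -> exists l, RD F s l) ->
  CRInt F a b = (Phi b - Phi a)%C.
Proof.
  intros Hab HP HF. unfold CRInt.
  assert (H1 : is_RInt (fun s => Re (F s)) a b (Re (Phi b) - Re (Phi a))).
  { apply (is_RInt_derive' (fun s => Re (Phi s))).
    + intros x Hx. rewrite Rmin_left, Rmax_right in Hx by lra. apply is_derive_Reals.
      replace (Re (F x)) with (Re (RtoC 1 * F x)%C) by (rewrite Cmult_1_l; reflexivity).
      apply (derivable_pt_lim_ext (fun s => Re (RtoC 1 * Phi s)%C)).
      intros; rewrite Cmult_1_l; reflexivity. apply RD_re; auto.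
    + intros x Hx. rewrite Rmin_left, Rmax_right in Hx by lra. destruct (HF x Hx) as [l Hl].
      eapply RD_cont_re; eauto. }
  assert (H2 : is_RInt (fun s => Im (F s)) a b (Im (Phi b) - Im (Phi a))).
  { apply (is_RInt_derive' (fun s => Im (Phi s))).
    + intros x Hx. rewrite Rmin_left, Rmax_right in Hx by lra. apply is_derive_Reals.
      rewrite Im_as_Re.
      apply (derivable_pt_lim_ext (fun s => Re (- Ci * Phi s)%C)).
      intros; rewrite <- Im_as_Re; reflexivity. apply RD_re; auto.
    + intros x Hx. rewrite Rmin_left, Rmax_right in Hx by lra. destruct (HF x Hx) as [l Hl].
      eapply RD_cont_im; eauto. }
  rewrite (RInt_unique' _ _ _ _ H1), (RInt_unique' _ _ _ _ H2).
  destruct (Phi b), (Phi a). unfold Cminus, Cplus, Copp; simpl. reflexivity.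
Qed.

Open Scope R_scope.


Definition BB (f : C -> C) := forall rho, exists M, 0 <= M /\ forall x, Cmod x <= rho -> Cmod (f x) <= M.

Lemma BB_Peval l : BB (Peval l).
Proof.
  intros rho. induction l as [|a l IH].
  - exists 0; split; [lra|]. intros x _. rewrite Peval_nil, Cmod_0. lra.
  - destruct IH as [M [HM H]]. exists (Cmod a + Rabs rho * M). split.
    { pose proof (Cmod_ge_0 a). pose proof (Rabs_pos rho). nra. }
    intros x Hx. rewrite Peval_cons. eapply Rle_trans; [apply Cmod_triangle|].
    rewrite Cmod_mult. apply Rplus_le_compat_l. apply Rmult_le_compat; auto using Cmod_ge_0.
    eapply Rle_trans; [exact Hx| apply Rle_abs].
Qed.

Lemma BB_add f g : BB f -> BB g -> BB (fun x => f x + g x)%C.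
Proof.
  intros Hf Hg rho. destruct (Hf rho) as [M1 [H1 K1]], (Hg rho) as [M2 [H2 K2]].
  exists (M1 + M2); split; [lra|]. intros x Hx. eapply Rle_trans; [apply Cmod_triangle|].
  specialize (K1 x Hx); specialize (K2 x Hx). lra.
Qed.

Lemma BB_mul f g : BB f -> BB g -> BB (fun x => f x * g x)%C.
Proof.
  intros Hf Hg rho. destruct (Hf rho) as [M1 [H1 K1]], (Hg rho) as [M2 [H2 K2]].
  exists (M1 * M2); split; [nra|]. intros x Hx. rewrite Cmod_mult.
  apply Rmult_le_compat; auto using Cmod_ge_0.
Qed.

Lemma BB_Cexp f : BB f -> BB (fun x => Cexp (f x)).
Proof.
  intros Hf rho. destruct (Hf rho) as [M [H K]].
  exists (exp M); split; [left; apply exp_pos|]. intros x Hx. rewrite Cmod_Cexp.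
  specialize (K x Hx). pose proof (Re_le_Cmod (f x)).
  destruct (Rle_lt_or_eq_dec (Re (f x)) M) as [L|E].
  { apply Rabs_le_between in H0. lra. }
  - left; apply exp_increasing; auto.
  - rewrite E; lra.
Qed.

Lemma Cmod_convex x y t rho : 0 <= t <= 1 -> Cmod x <= rho -> Cmod y <= rho ->
  Cmod (x + RtoC t * (y - x))%C <= rho.
Proof.
  intros Ht Hx Hy.
  replace (x + RtoC t * (y - x))%C with (RtoC (1 - t) * x + RtoC t * y)%C by (rewrite RtoC_minus; ring).
  eapply Rle_trans; [apply Cmod_triangle|]. rewrite !Cmod_mult, !Cmod_R.
  rewrite !Rabs_pos_eq by lra. nra.
Qed.

Lemma seg_MVI F F' x y M :
  (forall t, 0 <= t <= 1 -> CD F (x + RtoC t * (y - x))%C (F' (x + RtoC t * (y - x))%C)) ->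
  (forall t, 0 <= t <= 1 -> Cmod (F' (x + RtoC t * (y - x))%C) <= M) ->
  Cmod (F y - F x)%C <= M * Cmod (y - x)%C.
Proof.
  intros HD HB.
  assert (H := MVI (fun t => F (x + RtoC t * (y - x))%C) (fun t => F' (x + RtoC t * (y - x)) * (y - x))%C
    (fun t => M * Cmod (y - x)%C * t) (fun t => M * Cmod (y - x)%C) 0 1 ltac:(lra)).
  cbv beta in H.
  replace (x + RtoC 1 * (y - x))%C with y in H by (cbv beta; ring).
  replace (x + RtoC 0 * (y - x))%C with x in H by (cbv beta; ring).
  eapply Rle_trans; [apply H|lra].
  - intros s Hs. apply CD_line. apply HD; auto.
  - intros s Hs. pose proof (derivable_pt_lim_scal id (M * Cmod (y - x)%C) s 1 (derivable_pt_lim_id s)) as D.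
    unfold mult_real_fct, id in D. rewrite Rmult_1_r in D. exact D.
  - intros s Hs. rewrite Cmod_mult. apply Rmult_le_compat_r; auto using Cmod_ge_0.
Qed.

Section G.
Variables cp cq : list C.

Definition fE z := (Peval cp z * Cexp (Peval cq z))%C.
Definition fE1 z := ((Peval (Pderiv cp) z + Peval cp z * Peval (Pderiv cq) z) * Cexp (Peval cq z))%C.
Definition fE2 z := ((Peval (Pderiv (Pderiv cp)) z + (Peval (Pderiv cp) z * Peval (Pderiv cq) z
   + Peval cp z * Peval (Pderiv (Pderiv cq)) z)) * Cexp (Peval cq z)
   + (Peval (Pderiv cp) z + Peval cp z * Peval (Pderiv cq) z) * (Cexp (Peval cq z) * Peval (Pderiv cq) z))%C.

Lemma CD_Cexp_q z : CD (fun z => Cexp (Peval cq z)) z (Cexp (Peval cq z) * Peval (Pderiv cq) z)%C.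
Proof. apply (CD_comp (Peval cq) Cexp); [apply CD_Peval| apply CD_Cexp]. Qed.

Lemma CD_fE z : CD fE z (fE1 z).
Proof.
  unfold fE, fE1. eapply CD_eq. apply CD_mul; [apply CD_Peval| apply CD_Cexp_q]. cbv beta; ring.
Qed.

Lemma CD_fE1 z : CD fE1 z (fE2 z).
Proof.
  unfold fE1, fE2. eapply CD_eq. apply CD_mul; [| apply CD_Cexp_q].
  apply CD_add; [apply CD_Peval| apply CD_mul; apply CD_Peval]. cbv beta; ring.
Qed.

Lemma BB_fE2 : BB fE2.
Proof.
  unfold fE2. repeat first [apply BB_add | apply BB_mul | apply BB_Cexp | apply BB_Peval].
Qed.

Lemma Lip_fE1 rho : exists M, 0 <= M /\ forall x y, Cmod x <= rho -> Cmod y <= rho ->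
  Cmod (fE1 y - fE1 x)%C <= M * Cmod (y - x)%C.
Proof.
  destruct (BB_fE2 rho) as [M [HM H]]. exists M; split; auto. intros x y Hx Hy.
  apply (seg_MVI fE1 fE2).
  - intros; apply CD_fE1.
  - intros t Ht. apply H. apply Cmod_convex; auto.
Qed.

Definition Ifn z := CRInt (fun s => fE (RtoC s * z)%C) 0 1.
Definition I1fn z := CRInt (fun s => RtoC s * fE1 (RtoC s * z))%C 0 1.

Lemma CD_linmul w z : CD (fun x => x * w)%C z w.
Proof. eapply CD_eq. apply CD_mul; [apply CD_id|apply CD_const]. cbv beta; ring. Qed.

Lemma CD_fE_lin w z : CD (fun x => fE (x * w)%C) z (fE1 (z * w) * w)%C.
Proof.
  apply (CD_comp (fun x => x * w)%C fE z w). apply CD_linmul. apply CD_fE.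
Qed.

Lemma CD_fE1_lin w z : CD (fun x => x * fE1 (x * w))%C z (fE1 (z * w) + z * (fE2 (z * w) * w))%C.
Proof.
  eapply CD_eq. apply CD_mul; [apply CD_id|].
  apply (CD_comp (fun x => x * w)%C fE1 z w). apply CD_linmul. apply CD_fE1. cbv beta; ring.
Qed.

Lemma exRI_A w : exRI (fun s => fE (RtoC s * w))%C 0 1.
Proof. apply (exRI_CD (fun x => fE (x * w)%C)). intros s. eexists. apply CD_fE_lin. Qed.

Lemma exRI_C w : exRI (fun s => RtoC s * fE1 (RtoC s * w))%C 0 1.
Proof. apply (exRI_CD (fun x => x * fE1 (x * w))%C). intros s. eexists. apply CD_fE1_lin. Qed.

Lemma CD_I z : CD Ifn z (I1fn z).
Proof.
  destruct (Lip_fE1 (Cmod z + 1)) as [M [HM HL]].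
  intros eps Heps. exists (Rmin 1 (eps / (2 * M + 1))). split.
  { apply Rmin_glb_lt; [lra| apply Rdiv_lt_0_compat; lra]. }
  intros h Hh.
  assert (Hh1 : Cmod h <= 1) by (pose proof (Rmin_l 1 (eps / (2 * M + 1))); lra).
  assert (Hh2 : Cmod h <= eps / (2 * M + 1)) by (pose proof (Rmin_r 1 (eps / (2 * M + 1))); lra).
  set (A := fun s => fE (RtoC s * (z + h))%C).
  set (B := fun s => fE (RtoC s * z)%C).
  set (Cc := fun s => (RtoC s * fE1 (RtoC s * z))%C).
  assert (eA : exRI A 0 1) by apply exRI_A.
  assert (eB : exRI B 0 1) by apply exRI_A.
  assert (eC : exRI Cc 0 1) by apply exRI_C.
  set (AB := fun s => (A s + RtoC (-1) * B s)%C).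
  set (hC := fun s => ((- h) * Cc s)%C).
  set (E := fun s => (AB s + hC s)%C).
  assert (eB' : exRI (fun s => RtoC (-1) * B s)%C 0 1) by (apply exRI_scal; auto).
  assert (eAB : exRI AB 0 1) by (apply (exRI_plus A (fun s => RtoC (-1) * B s)%C); auto).
  assert (ehC : exRI hC 0 1) by (apply (exRI_scal (- h)%C Cc); auto).
  assert (HE : (Ifn (z + h) - Ifn z - I1fn z * h)%C = CRInt E 0 1).
  { unfold E. rewrite (CRInt_plus AB hC 0 1 eAB ehC).
    unfold AB. rewrite (CRInt_plus A (fun s => RtoC (-1) * B s)%C 0 1 eA eB').
    unfold hC. rewrite (CRInt_scal (- h)%C Cc 0 1 eC).
    rewrite (CRInt_scal (RtoC (-1)) B 0 1 eB).
    change (Ifn (z + h)) with (CRInt A 0 1). change (Ifn z) with (CRInt B 0 1).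
    change (I1fn z) with (CRInt Cc 0 1).
    ring. }
  rewrite HE.
  assert (Hb : forall s, 0 <= s <= 1 -> Cmod (E s) <= M * (Cmod h * Cmod h)).
  { intros s Hs. set (sz := (RtoC s * z)%C).
    assert (Hsz : Cmod sz <= Cmod z) by (unfold sz; rewrite Cmod_mult, Cmod_R, Rabs_pos_eq by lra; pose proof (Cmod_ge_0 z); nra).
    set (F := fun t => (fE t - t * fE1 sz)%C).
    assert (EF : E s = (F (RtoC s * (z + h)) - F sz)%C).
    { unfold E, AB, hC, A, B, Cc, F, sz. ring. }
    rewrite EF.
    assert (Hy : Cmod (RtoC s * (z + h))%C <= Cmod z + 1).
    { rewrite Cmod_mult, Cmod_R, Rabs_pos_eq by lra. pose proof (Cmod_triangle z h).
      pose proof (Cmod_ge_0 (z + h)%C). nra. }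
    assert (Hyx : Cmod (RtoC s * (z + h) - sz)%C <= Cmod h).
    { replace (RtoC s * (z + h) - sz)%C with (RtoC s * h)%C by (unfold sz; ring).
      rewrite Cmod_mult, Cmod_R, Rabs_pos_eq by lra. pose proof (Cmod_ge_0 h). nra. }
    eapply Rle_trans.
    { apply (seg_MVI F (fun t => fE1 t - fE1 sz)%C sz (RtoC s * (z + h))%C (M * Cmod h)).
      - intros t Ht. unfold F. eapply CD_eq. apply CD_sub; [apply CD_fE| apply CD_mul; [apply CD_id| apply CD_const]].
        cbv beta; ring.
      - intros t Ht. eapply Rle_trans; [apply HL|].
        + lra.
        + apply Cmod_convex; auto. lra.
        + replace (sz + RtoC t * (RtoC s * (z + h) - sz) - sz)%C with (RtoC t * (RtoC s * (z + h) - sz))%C by (cbv beta; ring).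
          rewrite Cmod_mult, Cmod_R, Rabs_pos_eq by lra.
          pose proof (Cmod_ge_0 (RtoC s * (z + h) - sz)%C). apply Rmult_le_compat_l; auto. nra. }
    pose proof (Cmod_ge_0 h). rewrite Rmult_assoc. apply Rmult_le_compat_l; [nra|]. apply Rmult_le_compat_l; auto. }
  eapply Rle_trans.
  { apply CRInt_bound; [| exact Hb]. apply (exRI_plus AB hC); auto. }
  pose proof (Cmod_ge_0 h).
  assert (2 * M * Cmod h <= eps).
  { apply Rle_trans with ((2 * M + 1) * Cmod h). nra.
    apply Rmult_le_compat_l with (r := 2 * M + 1) in Hh2; [|lra].
    replace ((2 * M + 1) * (eps / (2 * M + 1))) with eps in Hh2 by (field; lra). lra. }
  nra.
Qed.

Lemma CD_Psi z x : CD (fun y => y * fE (y * z))%C x (fE (x * z) + x * (fE1 (x * z) * z))%C.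
Proof.
  eapply CD_eq. apply CD_mul; [apply CD_id| apply CD_fE_lin]. cbv beta; ring.
Qed.

Lemma CD_Psi' z x : exists l, CD (fun y => fE (y * z) + y * (fE1 (y * z) * z))%C x l.
Proof.
  eexists. apply CD_add; [apply CD_fE_lin|]. apply CD_mul; [apply CD_id|].
  apply CD_mul; [| apply CD_const].
  apply (CD_comp (fun x => x * z)%C fE1 x z). apply CD_linmul. apply CD_fE1.
Qed.

Lemma FTC_fE z : (Ifn z + z * I1fn z)%C = fE z.
Proof.
  assert (H := CRInt_FTC (fun s => RtoC s * fE (RtoC s * z))%C
     (fun s => fE (RtoC s * z) + RtoC s * (fE1 (RtoC s * z) * z))%C 0 1 ltac:(lra)).
  transitivity (CRInt (fun s => fE (RtoC s * z) + RtoC s * (fE1 (RtoC s * z) * z))%C 0 1).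
  - unfold Ifn, I1fn.
    rewrite <- (CRInt_scal z (fun s => RtoC s * fE1 (RtoC s * z))%C 0 1 (exRI_C z)).
    rewrite <- (CRInt_plus (fun s => fE (RtoC s * z))%C (fun s => z * (RtoC s * fE1 (RtoC s * z)))%C 0 1
      (exRI_A z) (exRI_scal _ _ _ _ (exRI_C z))).
    apply CRInt_ext. intros s. ring.
  - rewrite H.
    + replace (RtoC 1 * z)%C with z by ring. ring.
    + intros s _. apply (CD_real (fun y => y * fE (y * z))%C). apply CD_Psi.
    + intros s _. destruct (CD_Psi' z (RtoC s)) as [l Hl]. exists l.
      apply (CD_real (fun y => fE (y * z) + y * (fE1 (y * z) * z))%C). exact Hl.
Qed.

Lemma CD_g (c z : C) : CD (fun x => seg_integral fE x + c)%C z (fE z).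
Proof.
  eapply CD_eq. apply CD_add; [| apply CD_const].
  - eapply CD_ext; [| apply CD_mul; [apply CD_id| apply CD_I]].
    intros x. reflexivity.
  - cbv beta. rewrite <- FTC_fE. ring.
Qed.

End G.

Open Scope R_scope.


Definition Near (f : C -> C) (c : C) := exists K T, 0 <= K /\ 1 <= T /\
  forall z, T <= Cmod z -> Cmod (f z - c)%C <= K / Cmod z.

Lemma Near_ext f g c : (forall z, 1 <= Cmod z -> f z = g z) -> Near f c -> Near g c.
Proof.
  intros E [K [T [HK [HT H]]]]. exists K, T. repeat split; auto.
  intros z Hz. rewrite <- E by lra. auto.
Qed.

Lemma Near_eq f c c' : Near f c -> c = c' -> Near f c'.
Proof. intros H <-; auto. Qed.

Lemma Near_const c : Near (fun _ => c) c.
Proof.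
  exists 0, 1. repeat split; try lra. intros z Hz.
  replace (c - c)%C with (RtoC 0) by ring. rewrite Cmod_0. unfold Rdiv; rewrite Rmult_0_l; lra.
Qed.

Lemma Near_add f g c d : Near f c -> Near g d -> Near (fun z => f z + g z)%C (c + d)%C.
Proof.
  intros [K1 [T1 [HK1 [HT1 H1]]]] [K2 [T2 [HK2 [HT2 H2]]]].
  exists (K1 + K2), (Rmax T1 T2). repeat split; try lra.
  { eapply Rle_trans; [exact HT1| apply Rmax_l]. }
  intros z Hz. assert (T1 <= Cmod z) by (eapply Rle_trans; [apply Rmax_l| exact Hz]).
  assert (T2 <= Cmod z) by (eapply Rle_trans; [apply Rmax_r| exact Hz]).
  replace (f z + g z - (c + d))%C with ((f z - c) + (g z - d))%C by ring.
  eapply Rle_trans; [apply Cmod_triangle|].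
  specialize (H1 z H). specialize (H2 z H0). unfold Rdiv in *. lra.
Qed.

Lemma Near_opp f c : Near f c -> Near (fun z => - f z)%C (- c)%C.
Proof.
  intros [K [T [HK [HT H]]]]. exists K, T. repeat split; auto.
  intros z Hz. replace (- f z - - c)%C with (- (f z - c))%C by ring. rewrite Cmod_opp. auto.
Qed.

Lemma Near_mul f g c d : Near f c -> Near g d -> Near (fun z => f z * g z)%C (c * d)%C.
Proof.
  intros [K1 [T1 [HK1 [HT1 H1]]]] [K2 [T2 [HK2 [HT2 H2]]]].
  pose proof (Cmod_ge_0 c). pose proof (Cmod_ge_0 d).
  exists (K1 * (Cmod d + K2) + Cmod c * K2), (Rmax T1 T2). repeat split.
  { apply Rplus_le_le_0_compat; apply Rmult_le_pos; lra. }
  { eapply Rle_trans; [exact HT1| apply Rmax_l]. }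
  intros z Hz. assert (Hz1' : T1 <= Cmod z) by (eapply Rle_trans; [apply Rmax_l| exact Hz]).
  assert (Hz2' : T2 <= Cmod z) by (eapply Rle_trans; [apply Rmax_r| exact Hz]).
  specialize (H1 z Hz1'). specialize (H2 z Hz2').
  assert (Hz1 : 1 <= Cmod z) by lra.
  replace (f z * g z - c * d)%C with ((f z - c) * g z + c * (g z - d))%C by ring.
  eapply Rle_trans; [apply Cmod_triangle|]. rewrite !Cmod_mult.
  assert (Hg : Cmod (g z) <= Cmod d + K2).
  { replace (g z) with (d + (g z - d))%C by ring. eapply Rle_trans; [apply Cmod_triangle|].
    assert (K2 / Cmod z <= K2).
    { unfold Rdiv. rewrite <- (Rmult_1_r K2) at 2. apply Rmult_le_compat_l; auto.
      rewrite <- Rinv_1. apply Rinv_le_contravar; lra. }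
    lra. }
  pose proof (Cmod_ge_0 (f z - c)%C). pose proof (Cmod_ge_0 (g z)).
  assert (E1 : Cmod (f z - c)%C * Cmod (g z) <= K1 / Cmod z * (Cmod d + K2)) by (apply Rmult_le_compat; auto).
  assert (E2 : Cmod c * Cmod (g z - d)%C <= Cmod c * (K2 / Cmod z)) by (apply Rmult_le_compat_l; auto).
  unfold Rdiv in *. nra.
Qed.

Lemma Near_lower f c : Near f c -> c <> RtoC 0 ->
  exists T, 1 <= T /\ forall z, T <= Cmod z -> Cmod c / 2 <= Cmod (f z).
Proof.
  intros [K [T [HK [HT H]]]] Hc. assert (Hm : 0 < Cmod c) by (apply Cmod_gt_0; auto).
  exists (Rmax T (2 * K / Cmod c + 1)). split. { eapply Rle_trans; [exact HT| apply Rmax_l]. }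
  intros z Hz. assert (T <= Cmod z) by (eapply Rle_trans; [apply Rmax_l| exact Hz]).
  assert (2 * K / Cmod c + 1 <= Cmod z) by (eapply Rle_trans; [apply Rmax_r| exact Hz]).
  specialize (H z H0).
  assert (K / Cmod z <= Cmod c / 2).
  { apply Rmult_le_reg_r with (Cmod z); [lra|]. unfold Rdiv. rewrite Rmult_assoc, Rinv_l by lra.
    assert (2 * K / Cmod c * Cmod c = 2 * K) by (field; lra).
    assert (0 <= 2 * K / Cmod c) by (apply Rdiv_le_0_compat; lra). nra. }
  pose proof (Cmod_sub_le c (c - f z)%C). replace (c - (c - f z))%C with (f z) in H3 by ring.
  rewrite <- Cmod_opp in H. replace (- (f z - c))%C with (c - f z)%C in H by ring. lra.
Qed.

Lemma Near_bound f c : Near f c -> exists T, 1 <= T /\ forall z, T <= Cmod z -> Cmod (f z) <= Cmod c + 1.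
Proof.
  intros [K [T [HK [HT H]]]]. exists (Rmax T (K + 1)). split. { eapply Rle_trans; [exact HT| apply Rmax_l]. }
  intros z Hz. assert (T <= Cmod z) by (eapply Rle_trans; [apply Rmax_l| exact Hz]).
  assert (K + 1 <= Cmod z) by (eapply Rle_trans; [apply Rmax_r| exact Hz]).
  specialize (H z H0).
  assert (K / Cmod z <= 1).
  { apply Rmult_le_reg_r with (Cmod z); [lra|]. unfold Rdiv. rewrite Rmult_assoc, Rinv_l by lra. lra. }
  replace (f z) with (c + (f z - c))%C by ring. eapply Rle_trans; [apply Cmod_triangle|]. lra.
Qed.

Lemma Near_inv f c : Near f c -> c <> RtoC 0 -> Near (fun z => / f z)%C (/ c)%C.
Proof.
  intros Hf Hc. destruct (Near_lower f c Hf Hc) as [T1 [HT1 HL]].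
  destruct Hf as [K [T [HK [HT H]]]]. assert (Hm : 0 < Cmod c) by (apply Cmod_gt_0; auto).
  exists (2 * K / (Cmod c * Cmod c)), (Rmax T T1). repeat split.
  { apply Rdiv_le_0_compat; nra. }
  { eapply Rle_trans; [exact HT| apply Rmax_l]. }
  intros z Hz. assert (T <= Cmod z) by (eapply Rle_trans; [apply Rmax_l| exact Hz]).
  assert (T1 <= Cmod z) by (eapply Rle_trans; [apply Rmax_r| exact Hz]).
  specialize (H z H0). specialize (HL z H1).
  assert (Hfz : f z <> RtoC 0) by (intro E; rewrite E, Cmod_0 in HL; lra).
  replace (/ f z - / c)%C with ((c - f z) / (f z * c))%C by (field; auto).
  rewrite Cmod_div by (apply Cmult_neq_0; auto). rewrite Cmod_mult.
  rewrite <- Cmod_opp. replace (- (c - f z))%C with (f z - c)%C by ring.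
  assert (Hz1 : 0 < Cmod z) by lra.
  apply Rle_trans with ((K / Cmod z) / (Cmod c / 2 * Cmod c)).
  { unfold Rdiv at 1 3. apply Rmult_le_compat; auto using Cmod_ge_0.
    left; apply Rinv_0_lt_compat; apply Rmult_lt_0_compat; [|lra]. apply Cmod_gt_0; auto.
    apply Rinv_le_contravar; [nra|]. apply Rmult_le_compat_r; lra. }
  right. field. lra.
Qed.

Lemma Near_div f g c d : Near f c -> Near g d -> d <> RtoC 0 -> Near (fun z => f z / g z)%C (c / d)%C.
Proof. intros Hf Hg Hd. apply Near_mul; auto. apply Near_inv; auto. Qed.

Lemma Near_small f : Near f (RtoC 0) -> exists K T, 0 <= K /\ 1 <= T /\ forall z, T <= Cmod z -> Cmod (f z) <= K / Cmod z.
Proof.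
  intros [K [T [HK [HT H]]]]. exists K, T. repeat split; auto. intros z Hz.
  specialize (H z Hz). replace (f z - RtoC 0)%C with (f z) in H by ring. auto.
Qed.

Lemma Peval_near l N : (length l <= S N)%nat ->
  Near (fun z => Peval l z / z ^ N)%C (nth N l (RtoC 0)).
Proof.
  revert N. induction l as [|a l IH]; intros N Hl.
  - eapply Near_ext; [| eapply Near_eq; [apply (Near_const (RtoC 0))| destruct N; reflexivity]].
    intros z Hz. cbv beta. rewrite Peval_nil. unfold Cdiv. ring.
  - destruct N as [|N].
    + simpl in Hl. destruct l; [|simpl in Hl; lia].
      eapply Near_ext; [| apply (Near_const a)]. intros z Hz. cbv beta. rewrite Peval_cons, Peval_nil.
      change (z ^ 0)%C with (RtoC 1). field.
    + simpl in Hl. specialize (IH N ltac:(lia)).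
      destruct IH as [K [T [HK [HT H]]]].
      exists (K + Cmod a), T. repeat split; auto.
      { pose proof (Cmod_ge_0 a); lra. }
      intros z Hz. specialize (H z Hz).
      assert (Hz0 : z <> RtoC 0) by (intro E; rewrite E, Cmod_0 in Hz; lra).
      simpl nth. rewrite Peval_cons.
      replace ((a + z * Peval l z) / z ^ S N - nth N l (RtoC 0))%C
        with (a / z ^ S N + (Peval l z / z ^ N - nth N l (RtoC 0)))%C.
      2:{ simpl. field. split; auto. apply Cpow_nz; auto. }
      eapply Rle_trans; [apply Cmod_triangle|].
      rewrite Cmod_div by (apply Cpow_nz; auto). rewrite Cmod_pow.
      assert (Cmod a / Cmod z ^ S N <= Cmod a / Cmod z).
      { unfold Rdiv. apply Rmult_le_compat_l; [apply Cmod_ge_0|].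
        apply Rinv_le_contravar; [lra|]. simpl. rewrite <- (Rmult_1_r (Cmod z)) at 1.
        apply Rmult_le_compat_l; [lra|]. apply pow_R1_Rle. lra. }
      unfold Rdiv in *. lra.
Qed.

Open Scope R_scope.


Section Asym.
Variables (cp cq : list C) (m d : nat).
Hypothesis Hlp : length cp = S m.
Hypothesis Hnp : nth m cp (RtoC 0) = RtoC (INR d).
Hypothesis Hd : (1 <= d)%nat.
Hypothesis Hlq : length cq = S d.
Hypothesis Hnq : nth d cq (RtoC 0) = RtoC 1.

Definition lamC := RtoC ((INR d - 1 - INR m) / INR d).
Let p := Peval cp.
Let p1 := Peval (Pderiv cp).
Let q := Peval cq.
Let q1 := Peval (Pderiv cq).
Let q2 := Peval (Pderiv (Pderiv cq)).

Definition Pf z := (Peval cp z / Peval (Pderiv cq) z)%C.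
Definition P1f z := (Peval (Pderiv cp) z / Peval (Pderiv cq) z
   - Peval cp z * Peval (Pderiv (Pderiv cq)) z / (Peval (Pderiv cq) z * Peval (Pderiv cq) z))%C.
Definition kf z := (- (P1f z / Peval (Pderiv cq) z) * (1 + lamC / Peval cq z)
   + Pf z * lamC / (Peval cq z * Peval cq z) - Pf z * lamC / Peval cq z)%C.

Let X1 z := (p z / z ^ m)%C.
Let X2 z := (p1 z * z / z ^ m)%C.
Let X3 z := (q z / z ^ d)%C.
Let X4 z := (q1 z * z / z ^ d)%C.
Let X5 z := (q2 z * (z * z) / z ^ d)%C.

Lemma Cnz z : 1 <= Cmod z -> z <> RtoC 0.
Proof. intros H E. rewrite E, Cmod_0 in H. lra. Qed.

Lemma nX1 : Near X1 (RtoC (INR d)).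
Proof. rewrite <- Hnp. apply Peval_near. lia. Qed.

Lemma nX2 : Near X2 (RtoC (INR m) * RtoC (INR d))%C.
Proof.
  destruct m as [|m'] eqn:Em.
  - destruct cp as [|a [|b l]]; simpl in Hlp; try lia.
    eapply Near_ext; [| eapply Near_eq; [apply (Near_const (RtoC 0))|]].
    + intros z Hz. unfold X2, p1. simpl. unfold Cdiv. ring.
    + simpl. ring.
  - assert (Hl : (length (Pderiv cp) <= S m')%nat) by (rewrite Pderiv_length; lia).
    pose proof (Peval_near _ _ Hl) as H. rewrite Pderiv_nth, Hnp in H.
    eapply Near_ext; [| exact H]. intros z Hz. unfold X2, p1.
    assert (z <> RtoC 0) by (apply Cnz; auto). simpl. field. split; auto. apply Cpow_nz; auto.
Qed.

Lemma nX3 : Near X3 (RtoC 1).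
Proof. rewrite <- Hnq. apply Peval_near. lia. Qed.

Lemma nX4 : Near X4 (RtoC (INR d)).
Proof.
  destruct d as [|d'] eqn:Ed; [lia|].
  assert (Hl : (length (Pderiv cq) <= S d')%nat) by (rewrite Pderiv_length; lia).
  pose proof (Peval_near _ _ Hl) as H. rewrite Pderiv_nth, Hnq in H.
  eapply Near_ext; [| eapply Near_eq; [exact H| ring]]. intros z Hz. unfold X4, q1.
  assert (z <> RtoC 0) by (apply Cnz; auto). simpl. field. split; auto. apply Cpow_nz; auto.
Qed.

Lemma nX5 : Near X5 (RtoC (INR d) * (RtoC (INR d) - 1))%C.
Proof.
  destruct d as [|[|d'']] eqn:Ed; [lia| |].
  - assert (Hl : length (Pderiv (Pderiv cq)) = 0%nat) by (rewrite !Pderiv_length; lia).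
    assert (E0 : Pderiv (Pderiv cq) = nil) by (destruct (Pderiv (Pderiv cq)); [reflexivity| simpl in Hl; lia]).
    eapply Near_ext; [| eapply Near_eq; [apply (Near_const (RtoC 0))|]].
    + intros z Hz. unfold X5, q2. rewrite E0, Peval_nil. unfold Cdiv. ring.
    + simpl. ring.
  - assert (Hl : (length (Pderiv (Pderiv cq)) <= S d'')%nat) by (rewrite !Pderiv_length; lia).
    pose proof (Peval_near _ _ Hl) as H. rewrite !Pderiv_nth, Hnq in H.
    eapply Near_ext; [| eapply Near_eq; [exact H|]].
    + intros z Hz. unfold X5, q2.
      assert (z <> RtoC 0) by (apply Cnz; auto). simpl. field. split; auto. apply Cpow_nz; auto.
    + rewrite !S_INR. rewrite !RtoC_plus. ring.
Qed.

Definition Phi1 (x1 x2 x3 x4 x5 : C) := (- ((x2 * x4 + - (x1 * x5)) * / (x4 * (x4 * x4))) + - (lamC * x1 * / (x4 * x3)))%C.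
Definition Phi2 (x1 x2 x3 x4 x5 : C) := (- (lamC * (x2 * x4 + - (x1 * x5)) * / (x3 * (x4 * (x4 * x4)))) + lamC * x1 * / (x4 * (x3 * x3)))%C.

Lemma dnz : RtoC (INR d) <> RtoC 0.
Proof. intro E. apply RtoC_inj in E. apply (not_0_INR d); [lia| auto]. Qed.

Ltac near_solve := repeat first [ apply nX1 | apply nX2 | apply nX3 | apply nX4 | apply nX5 | apply Near_const
   | eapply Near_add | eapply Near_opp | eapply Near_mul | eapply Near_inv ].
Ltac nz_solve := repeat first [ apply Cmult_neq_0 | apply dnz | apply C1_nz ].

Lemma nPhi1 : Near (fun z => Phi1 (X1 z) (X2 z) (X3 z) (X4 z) (X5 z)) (RtoC 0).
Proof.
  eapply Near_eq.
  { unfold Phi1. near_solve; nz_solve. }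
  unfold lamC. rewrite RtoC_div by (apply not_0_INR; lia). rewrite !RtoC_minus.
  field. apply dnz.
Qed.

Lemma nPhi2 : exists c, Near (fun z => Phi2 (X1 z) (X2 z) (X3 z) (X4 z) (X5 z)) c.
Proof. eexists. unfold Phi2. near_solve; nz_solve. Qed.

Lemma kf_id z : 1 <= Cmod z -> q z <> RtoC 0 -> q1 z <> RtoC 0 ->
  kf z = (z ^ m * z / (z ^ d * z ^ d) * (Phi1 (X1 z) (X2 z) (X3 z) (X4 z) (X5 z)
     + Phi2 (X1 z) (X2 z) (X3 z) (X4 z) (X5 z) / z ^ d))%C.
Proof.
  intros Hz Hq Hq1. assert (Hz0 : z <> RtoC 0) by (apply Cnz; auto).
  assert (Hm : (z ^ m)%C <> RtoC 0) by (apply Cpow_nz; auto).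
  assert (Hdd : (z ^ d)%C <> RtoC 0) by (apply Cpow_nz; auto).
  unfold kf, Pf, P1f, Phi1, Phi2, X1, X2, X3, X4, X5, p, p1, q, q1, q2 in *.
  field. repeat split; auto.
Qed.

Lemma Rmax_le_l a b c : Rmax a b <= c -> a <= c.
Proof. intros H. eapply Rle_trans; [apply Rmax_l| exact H]. Qed.
Lemma Rmax_le_r a b c : Rmax a b <= c -> b <= c.
Proof. intros H. eapply Rle_trans; [apply Rmax_r| exact H]. Qed.

Lemma asym_facts : exists T Ck cP, 1 <= T /\ 0 <= Ck /\ 0 < cP /\ forall z, T <= Cmod z ->
  q z <> RtoC 0 /\ q1 z <> RtoC 0 /\ p z <> RtoC 0 /\
  Cmod (kf z) <= Ck * (Cmod z ^ m / Cmod z ^ (2 * d)) /\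
  Cmod z ^ d / 2 <= Cmod (q z) <= 2 * Cmod z ^ d /\
  cP * (Cmod z ^ m * Cmod z / Cmod z ^ d) <= Cmod (Pf z).
Proof.
  assert (Hd0 : 0 < INR d) by (apply lt_0_INR; lia).
  assert (Cd : Cmod (RtoC (INR d)) = INR d) by (rewrite Cmod_R; apply Rabs_pos_eq; lra).
  destruct (Near_lower _ _ nX3 C1_nz) as [T1 [HT1 L3]].
  destruct (Near_bound _ _ nX3) as [T2 [HT2 B3]].
  destruct (Near_lower _ _ nX4 dnz) as [T3 [HT3 L4]].
  destruct (Near_bound _ _ nX4) as [T4 [HT4 B4]].
  destruct (Near_lower _ _ nX1 dnz) as [T5 [HT5 L1]].
  destruct (Near_small _ nPhi1) as [K [T6 [HK [HT6 S1]]]].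
  destruct nPhi2 as [c2 N2]. destruct (Near_bound _ _ N2) as [T7 [HT7 B2]].
  rewrite Cmod_1 in L3, B3. rewrite Cd in L4, B4, L1.
  exists (Rmax (Rmax (Rmax T1 T2) (Rmax T3 T4)) (Rmax (Rmax T5 T6) T7)).
  exists (K + (Cmod c2 + 1)), ((INR d / 2) / (INR d + 1)).
  split. { eapply Rle_trans; [exact HT1|]. eapply Rle_trans; [|apply Rmax_l].
           eapply Rle_trans; [|apply Rmax_l]. apply Rmax_l. }
  split. { pose proof (Cmod_ge_0 c2). lra. }
  split. { apply Rdiv_lt_0_compat; lra. }
  intros z Hz.
  assert (z1 : T1 <= Cmod z) by (do 3 apply Rmax_le_l in Hz; auto).
  assert (z2 : T2 <= Cmod z) by (apply Rmax_le_l, Rmax_le_l, Rmax_le_r in Hz; auto).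
  assert (z3 : T3 <= Cmod z) by (apply Rmax_le_l, Rmax_le_r, Rmax_le_l in Hz; auto).
  assert (z4 : T4 <= Cmod z) by (apply Rmax_le_l, Rmax_le_r, Rmax_le_r in Hz; auto).
  assert (z5 : T5 <= Cmod z) by (apply Rmax_le_r, Rmax_le_l, Rmax_le_l in Hz; auto).
  assert (z6 : T6 <= Cmod z) by (apply Rmax_le_r, Rmax_le_l, Rmax_le_r in Hz; auto).
  assert (z7 : T7 <= Cmod z) by (apply Rmax_le_r, Rmax_le_r in Hz; auto).
  specialize (L3 z z1). specialize (B3 z z2). specialize (L4 z z3). specialize (B4 z z4).
  specialize (L1 z z5). specialize (S1 z z6). specialize (B2 z z7).
  assert (Hz1 : 1 <= Cmod z) by lra.
  assert (Hz0 : z <> RtoC 0) by (apply Cnz; auto).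
  assert (Hzm : (z ^ m)%C <> RtoC 0) by (apply Cpow_nz; auto).
  assert (Hzd : (z ^ d)%C <> RtoC 0) by (apply Cpow_nz; auto).
  set (a := Cmod z) in *.
  assert (Ha : 0 < a) by lra.
  assert (HA : 0 < a ^ m) by (apply pow_lt; lra).
  assert (HD : 0 < a ^ d) by (apply pow_lt; lra).
  assert (HDa : a <= a ^ d).
  { destruct d as [|d']; [lia|]. simpl. rewrite <- (Rmult_1_r a) at 1. apply Rmult_le_compat_l; [lra|].
    apply pow_R1_Rle; lra. }
  assert (Eq : q z = (X3 z * z ^ d)%C) by (unfold X3; field; auto).
  assert (Eq1 : q1 z = (X4 z * z ^ d / z)%C) by (unfold X4; field; auto).
  assert (Ep : p z = (X1 z * z ^ m)%C) by (unfold X1; field; auto).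
  assert (Hq : Cmod (q z) = Cmod (X3 z) * a ^ d) by (rewrite Eq, Cmod_mult, Cmod_pow; auto).
  assert (Hq1 : Cmod (q1 z) = Cmod (X4 z) * a ^ d / a) by (rewrite Eq1, Cmod_div, Cmod_mult, Cmod_pow by auto; auto).
  assert (Hp : Cmod (p z) = Cmod (X1 z) * a ^ m) by (rewrite Ep, Cmod_mult, Cmod_pow; auto).
  assert (nq : q z <> RtoC 0).
  { intro E. rewrite E, Cmod_0 in Hq. nra. }
  assert (nq1 : q1 z <> RtoC 0).
  { intro E. rewrite E, Cmod_0 in Hq1. assert (0 < Cmod (X4 z) * a ^ d / a) by (apply Rdiv_lt_0_compat; nra). lra. }
  assert (np : p z <> RtoC 0).
  { intro E. rewrite E, Cmod_0 in Hp. nra. }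
  split; [auto|]. split; [auto|]. split; [auto|].
  split.
  { assert (Ek : Cmod (kf z) = a ^ m * a / (a ^ d * a ^ d) * Cmod (Phi1 (X1 z) (X2 z) (X3 z) (X4 z) (X5 z)
       + Phi2 (X1 z) (X2 z) (X3 z) (X4 z) (X5 z) / z ^ d)%C).
    { rewrite kf_id by auto. rewrite Cmod_mult. f_equal.
      rewrite Cmod_div by (apply Cmult_neq_0; auto). rewrite !Cmod_mult, !Cmod_pow. reflexivity. }
    rewrite Ek.
    eapply Rle_trans. apply Rmult_le_compat_l. apply Rdiv_le_0_compat; [nra|]. apply Rmult_lt_0_compat; auto.
    apply Cmod_triangle.
    rewrite Cmod_div, Cmod_pow by auto. change (Cmod z) with a.
    assert (Cmod (Phi2 (X1 z) (X2 z) (X3 z) (X4 z) (X5 z)) / a ^ d <= (Cmod c2 + 1) / a).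
    { unfold Rdiv. apply Rmult_le_compat; auto. apply Cmod_ge_0. left; apply Rinv_0_lt_compat; auto.
      apply Rinv_le_contravar; auto. }
    replace (a ^ (2 * d)) with (a ^ d * a ^ d) by (rewrite <- pow_add; f_equal; lia).
    apply Rle_trans with (a ^ m * a / (a ^ d * a ^ d) * ((K + (Cmod c2 + 1)) / a)).
    { apply Rmult_le_compat_l. apply Rdiv_le_0_compat; nra.
      unfold Rdiv in *. lra. }
    right. field. lra. }
  split.
  { rewrite Hq. split; nra. }
  unfold Pf. rewrite Cmod_div by auto. fold p q1. rewrite Hp, Hq1.
  assert (0 < Cmod (X4 z)) by lra.
  apply Rle_trans with ((INR d / 2) * a ^ m / ((INR d + 1) * a ^ d / a)).
  { right. field. repeat split; lra. }
  unfold Rdiv. apply Rmult_le_compat.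
  - apply Rmult_le_pos; lra.
  - left. apply Rinv_0_lt_compat. apply Rmult_lt_0_compat; [nra|]. apply Rinv_0_lt_compat; lra.
  - apply Rmult_le_compat_r; lra.
  - apply Rinv_le_contravar. apply Rmult_lt_0_compat; [nra|]. apply Rinv_0_lt_compat; lra.
    apply Rmult_le_compat_r. left; apply Rinv_0_lt_compat; lra. nra.
Qed.

End Asym.

Open Scope R_scope.


Lemma C_ball (x y : C) (e : R) : @ball C_UniformSpace x e y = (Rabs (fst y - fst x) < e /\ Rabs (snd y - snd x) < e).
Proof. reflexivity. Qed.

Lemma ReIm_fst (v w : C) : fst v - fst w = Re (v - w)%C.
Proof. destruct v, w; reflexivity. Qed.
Lemma ReIm_snd (v w : C) : snd v - snd w = Im (v - w)%C.
Proof. destruct v, w; reflexivity. Qed.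

Lemma Re_sub (v w : C) : Re (v - w)%C = Re v - Re w.
Proof. destruct v, w; reflexivity. Qed.
Lemma Im_sub (v w : C) : Im (v - w)%C = Im v - Im w.
Proof. destruct v, w; reflexivity. Qed.

Lemma cont_eps (phi : C -> C) w : continuous phi w ->
  forall eps, 0 < eps -> exists del, 0 < del /\ forall v, Cmod (v - w)%C < del -> Cmod (phi v - phi w)%C < eps.
Proof.
  intros H eps Heps. unfold continuous in H. rewrite filterlim_locally in H.
  specialize (H (mkposreal (eps / 2) ltac:(lra))). destruct H as [d Hd].
  exists d; split; [apply cond_pos|]. intros v Hv.
  assert (Hb : @ball C_UniformSpace w d v).
  { rewrite C_ball. pose proof (Re_le_Cmod (v - w)%C). pose proof (Im_le_Cmod (v - w)%C).
    rewrite (ReIm_fst v w), (ReIm_snd v w). split; lra. }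
  specialize (Hd v Hb). rewrite C_ball in Hd. cbn [pos] in Hd.
  eapply Rle_lt_trans; [apply Cmod_le_sum|].
  rewrite <- (ReIm_fst (phi v) (phi w)), <- (ReIm_snd (phi v) (phi w)). lra.
Qed.

Definition Gset (Rr : R) (w : C) := Rr < Cmod w /\ ~ (Im w = 0 /\ 0 <= Re w).

Lemma G_open Rr w : Gset Rr w -> exists del, 0 < del /\ forall v, Cmod (v - w)%C < del -> Gset Rr v.
Proof.
  intros [H1 H2].
  assert (Hc : forall v, Cmod (v - w)%C < Cmod w - Rr -> Rr < Cmod v).
  { intros v Hv. pose proof (Cmod_sub_le w (w - v)%C). replace (w - (w - v))%C with v in H by ring.
    rewrite <- Cmod_opp in Hv. replace (- (v - w))%C with (w - v)%C in Hv by ring. lra. }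
  destruct (Req_dec (Im w) 0) as [E|E].
  - assert (Hr : Re w < 0) by (apply Rnot_le_lt; intro; apply H2; auto).
    exists (Rmin (Cmod w - Rr) (- Re w)). split. { apply Rmin_glb_lt; lra. }
    intros v Hv. split. { apply Hc. eapply Rlt_le_trans; [exact Hv| apply Rmin_l]. }
    intros [_ Hv2]. pose proof (Re_le_Cmod (v - w)%C). pose proof (Rmin_r (Cmod w - Rr) (- Re w)).
    rewrite Re_sub in H. apply Rabs_le_between in H. lra.
  - exists (Rmin (Cmod w - Rr) (Rabs (Im w))). split. { apply Rmin_glb_lt; [lra| apply Rabs_pos_lt; auto]. }
    intros v Hv. split. { apply Hc. eapply Rlt_le_trans; [exact Hv| apply Rmin_l]. }
    intros [Hv1 _]. pose proof (Im_le_Cmod (v - w)%C). pose proof (Rmin_r (Cmod w - Rr) (Rabs (Im w))).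
    rewrite Im_sub, Hv1 in H. replace (0 - Im w) with (- Im w) in H by ring. rewrite Rabs_Ropp in H. lra.
Qed.

Lemma CD_inverse (q phi : C -> C) (w l : C) :
  (exists del, 0 < del /\ forall v, Cmod (v - w)%C < del -> q (phi v) = v) ->
  (forall eps, 0 < eps -> exists del, 0 < del /\ forall v, Cmod (v - w)%C < del -> Cmod (phi v - phi w)%C < eps) ->
  CD q (phi w) l -> l <> RtoC 0 -> CD phi w (/ l)%C.
Proof.
  intros [d0 [Hd0 Hinv]] Hc Hq Hl eps Heps.
  assert (Hm : 0 < Cmod l) by (apply Cmod_gt_0; auto).
  set (e1 := Rmin (Cmod l / 2) (eps * (Cmod l * Cmod l) / 2)).
  assert (He1 : 0 < e1) by (unfold e1; apply Rmin_glb_lt; [lra| apply Rdiv_lt_0_compat; [apply Rmult_lt_0_compat; nra|lra]]).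
  destruct (Hq e1 He1) as [dq [Hdq Hq1]].
  destruct (Hc dq Hdq) as [dc [Hdc Hc1]].
  exists (Rmin d0 dc). split. { apply Rmin_glb_lt; auto. }
  intros h Hh.
  assert (h0 : Cmod ((w + h) - w)%C < d0) by (replace ((w + h) - w)%C with h by ring; eapply Rlt_le_trans; [exact Hh| apply Rmin_l]).
  assert (hc : Cmod ((w + h) - w)%C < dc) by (replace ((w + h) - w)%C with h by ring; eapply Rlt_le_trans; [exact Hh| apply Rmin_r]).
  assert (w0 : Cmod (w - w)%C < d0) by (replace (w - w)%C with (RtoC 0) by ring; rewrite Cmod_0; lra).
  specialize (Hc1 _ hc).
  set (k := (phi (w + h) - phi w)%C) in *.
  specialize (Hq1 k Hc1).
  replace (phi w + k)%C with (phi (w + h)%C) in Hq1 by (unfold k; ring).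
  rewrite (Hinv _ h0), (Hinv _ w0) in Hq1.
  replace (w + h - w - l * k)%C with (h - l * k)%C in Hq1 by ring.
  assert (Hk : Cmod k <= 2 * Cmod h / Cmod l).
  { assert (Cmod l * Cmod k <= Cmod h + e1 * Cmod k).
    { rewrite <- Cmod_mult. replace (l * k)%C with (h - (h - l * k))%C by ring.
      eapply Rle_trans; [apply Cmod_triangle|]. rewrite Cmod_opp. lra. }
    assert (e1 <= Cmod l / 2) by apply Rmin_l. pose proof (Cmod_ge_0 k).
    apply Rmult_le_reg_r with (Cmod l); [lra|]. unfold Rdiv. rewrite Rmult_assoc, Rinv_l by lra. nra. }
  replace (k - / l * h)%C with (- ((h - l * k) / l))%C by (field; auto).
  rewrite Cmod_opp, Cmod_div by auto.
  apply Rle_trans with (e1 * (2 * Cmod h / Cmod l) / Cmod l).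
  { unfold Rdiv. apply Rmult_le_compat_r. left; apply Rinv_0_lt_compat; lra.
    eapply Rle_trans; [exact Hq1|]. apply Rmult_le_compat_l; lra. }
  assert (e1 <= eps * (Cmod l * Cmod l) / 2) by apply Rmin_r.
  pose proof (Cmod_ge_0 h).
  apply Rle_trans with (eps * (Cmod l * Cmod l) / 2 * (2 * Cmod h / Cmod l) / Cmod l).
  { unfold Rdiv. apply Rmult_le_compat_r. left; apply Rinv_0_lt_compat; lra.
    apply Rmult_le_compat_r; [|lra]. apply Rmult_le_pos; [lra|]. left; apply Rinv_0_lt_compat; lra. }
  right. field. lra.
Qed.

Open Scope R_scope.


Lemma exp_ge_lin x : 1 + x <= exp x.
Proof. destruct (Req_dec x 0) as [->|H]. rewrite exp_0; lra. left; apply exp_ineq1; auto. Qed.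

Lemma exp_pow x n : exp x ^ n = exp (INR n * x).
Proof.
  induction n as [|n IH]. simpl. rewrite Rmult_0_l, exp_0. reflexivity.
  simpl pow. rewrite IH, <- exp_plus. rewrite S_INR. f_equal. ring.
Qed.

Lemma exp_poly j : exists M, 0 < M /\ forall s, 0 <= s -> (1 + 2 * s) ^ j <= M * exp (s / 2).
Proof.
  destruct j as [|j'].
  - exists 1. split; [lra|]. intros s Hs. simpl. pose proof (exp_ge_lin (s/2)). lra.
  - set (j := S j'). assert (Hj : 1 <= INR j) by (unfold j; rewrite S_INR; pose proof (pos_INR j'); lra).
    exists ((4 * INR j) ^ j). split. { apply pow_lt; lra. }
    intros s Hs.
    replace (1 + 2 * s) with (4 * INR j * ((1 + 2 * s) / (4 * INR j))) by (field; lra).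
    rewrite Rpow_mult_distr. apply Rmult_le_compat_l. { apply pow_le; lra. }
    replace (s / 2) with (INR j * (s / (2 * INR j))) by (field; lra).
    rewrite <- exp_pow. apply pow_incr. split.
    + apply Rdiv_le_0_compat; lra.
    + eapply Rle_trans; [| apply exp_ge_lin].
      replace ((1 + 2 * s) / (4 * INR j)) with (/ (4 * INR j) + s / (2 * INR j)) by (field; lra).
      apply Rplus_le_compat_r. rewrite <- Rinv_1. apply Rinv_le_contravar; lra.
Qed.

Lemma deriv_beta A s : derivable_pt_lim (fun s => - 2 * A * exp (- s / 2)) s (A * exp (- s / 2)).
Proof.
  assert (H1 : derivable_pt_lim (fun s => - s / 2) s (- / 2)).
  { replace (- / 2) with (/ 2 * - 1) by field.
    apply (derivable_pt_lim_ext (fun s => / 2 * (- s))). intros; field.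
    apply derivable_pt_lim_scal with (f := fun s => - s). apply derivable_pt_lim_opp, derivable_pt_lim_id. }
  assert (H2 := derivable_pt_lim_comp (fun s => - s / 2) exp s (- / 2) (exp (- s / 2)) H1 (derivable_pt_lim_exp _)).
  replace (A * exp (- s / 2)) with (- 2 * A * (exp (- s / 2) * - / 2)) by field.
  apply derivable_pt_lim_scal with (f := fun s => exp (- s / 2)). exact H2.
Qed.

Section Main.
Variables (cp cq : list C) (m d : nat) (c : C) (Rr : R) (phi : C -> C).
Hypothesis Hlp : length cp = S m.
Hypothesis Hnp : nth m cp (RtoC 0) = RtoC (INR d).
Hypothesis Hd : (1 <= d)%nat.
Hypothesis Hlq : length cq = S d.
Hypothesis Hnq : nth d cq (RtoC 0) = RtoC 1.
Hypothesis HR : 0 < Rr.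
Hypothesis Hcrit : forall z, Peval (Pderiv cq) z = RtoC 0 -> Cmod (Peval cq z) < Rr.
Hypothesis Hcont : forall w, Gset Rr w -> continuous phi w.
Hypothesis Hinv : forall w, Gset Rr w -> Peval cq (phi w) = w.

Definition gf z := (seg_integral (fE cp cq) z + c)%C.
Definition Hf u := (gf (phi u) - Pf cp cq (phi u) * ((1 + lamC m d / u) * Cexp u))%C.

Lemma q1_nz u : Gset Rr u -> Peval (Pderiv cq) (phi u) <> RtoC 0.
Proof.
  intros Hu E. apply Hcrit in E. rewrite Hinv in E by auto. destruct Hu. lra.
Qed.

Lemma u_nz u : Gset Rr u -> u <> RtoC 0.
Proof. intros [H _] E. rewrite E, Cmod_0 in H. lra. Qed.

Lemma CD_phi u : Gset Rr u -> CD phi u (/ Peval (Pderiv cq) (phi u))%C.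
Proof.
  intros Hu. apply (CD_inverse (Peval cq)).
  - destruct (G_open Rr u Hu) as [del [Hdel H]]. exists del; split; auto.
  - apply cont_eps. auto.
  - apply CD_Peval.
  - apply q1_nz; auto.
Qed.

Lemma CD_Pf z : Peval (Pderiv cq) z <> RtoC 0 -> CD (Pf cp cq) z (P1f cp cq z).
Proof.
  intros Hz. unfold Pf. eapply CD_eq. apply CD_div; [apply CD_Peval| apply CD_Peval| auto].
  unfold P1f. field. auto.
Qed.

Lemma CD_Hf u : Gset Rr u -> CD Hf u (Cexp u * kf cp cq m d (phi u))%C.
Proof.
  intros Hu. assert (Hq1 := q1_nz u Hu). assert (Hu0 := u_nz u Hu).
  assert (Hq := Hinv u Hu).
  unfold Hf. eapply CD_eq. apply CD_sub.
  - apply (CD_comp phi gf). apply CD_phi; auto. unfold gf. apply CD_g.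
  - apply CD_mul.
    + apply (CD_comp phi (Pf cp cq)). apply CD_phi; auto. apply CD_Pf; auto.
    + apply CD_mul; [| apply CD_Cexp]. apply CD_add; [apply CD_const|].
      apply CD_div; [apply CD_const| apply CD_id| auto].
  - cbv beta. unfold fE, kf, Pf, P1f. rewrite Hq. field. repeat split; auto.
Qed.

Definition rho u := Rpower (Cmod u) (/ INR d).
Definition Qb u := rho u ^ m / rho u ^ (2 * d).

Lemma INRd_pos : 0 < INR d.
Proof. apply lt_0_INR; lia. Qed.

Lemma rho_pos u : 0 < rho u.
Proof. unfold rho, Rpower. apply exp_pos. Qed.

Lemma rho_pow u : 0 < Cmod u -> rho u ^ d = Cmod u.
Proof.
  intros H. unfold rho. rewrite <- Rpower_pow by (unfold Rpower; apply exp_pos).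
  rewrite Rpower_mult. rewrite Rinv_l by (pose proof INRd_pos; lra). apply Rpower_1; auto.
Qed.

Lemma pow_lt_S x y n : 0 <= y < x -> y ^ (S n) < x ^ (S n).
Proof.
  intros H. induction n as [|n IH].
  - simpl. lra.
  - change (y * y ^ S n < x * x ^ S n).
    assert (0 <= y ^ S n) by (apply pow_le; lra).
    assert (0 < x ^ S n) by (apply pow_lt; lra). nra.
Qed.

Lemma pow_le_inv x y : 0 <= x -> 0 <= y -> x ^ d <= y ^ d -> x <= y.
Proof.
  intros Hx Hy H. destruct (Rle_lt_dec x y) as [L|L]; auto.
  exfalso. assert (y ^ d < x ^ d).
  { destruct d as [|d']; [lia|]. apply pow_lt_S; lra. }
  lra.
Qed.

Lemma Qb_pos u : 0 < Qb u.
Proof. unfold Qb. pose proof (rho_pos u). apply Rdiv_lt_0_compat; apply pow_lt; lra. Qed.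

Lemma rho_ge1 u : 1 <= Cmod u -> 1 <= rho u /\ rho u <= Cmod u.
Proof.
  intros H. pose proof (rho_pos u). pose proof (rho_pow u ltac:(lra)). split.
  - apply pow_le_inv; try lra. rewrite pow1, H1. auto.
  - apply pow_le_inv; try lra. rewrite H1.
    destruct d as [|d']; [lia|]. simpl. rewrite <- (Rmult_1_r (Cmod u)) at 1.
    apply Rmult_le_compat_l; [lra|]. apply pow_R1_Rle. lra.
Qed.

Lemma Qb_le u : 1 <= Cmod u -> Qb u <= Cmod u ^ m.
Proof.
  intros H. destruct (rho_ge1 u H) as [H1 H2]. unfold Qb.
  apply Rle_trans with (rho u ^ m).
  - unfold Rdiv. rewrite <- (Rmult_1_r (rho u ^ m)) at 2. apply Rmult_le_compat_l.
    apply pow_le; lra. rewrite <- Rinv_1. apply Rinv_le_contravar; [lra|]. apply pow_R1_Rle; lra.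
  - apply pow_incr; lra.
Qed.

Lemma bounds : exists r1 Ck cP, 1 <= r1 /\ Rr < r1 /\ 0 <= Ck /\ 0 < cP /\
  forall u, Gset Rr u -> r1 <= Cmod u ->
    Peval cp (phi u) <> RtoC 0 /\
    Cmod (kf cp cq m d (phi u)) <= Ck * Qb u /\
    cP * (rho u ^ m * rho u / rho u ^ d) <= Cmod (Pf cp cq (phi u)).
Proof.
  destruct (asym_facts cp cq m d Hlp Hnp Hd Hlq Hnq) as [T [Ck [cP [HT [HCk [HcP H]]]]]].
  destruct (BB_Peval cq T) as [Bq [HBq HB]].
  exists (Rmax (Rmax 1 (Rr + 1)) (Bq + 1)), (Ck * (2 ^ m * 2 ^ (2 * d))), (cP * ((/2) ^ m * (/2) / 2 ^ d)).
  split. { eapply Rle_trans; [| apply Rmax_l]. apply Rmax_l. }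
  split. { eapply Rlt_le_trans; [| apply Rmax_l]. eapply Rlt_le_trans; [| apply Rmax_r]. lra. }
  split. { apply Rmult_le_pos; auto. apply Rmult_le_pos; apply pow_le; lra. }
  split. { apply Rmult_lt_0_compat; auto. apply Rdiv_lt_0_compat; [apply Rmult_lt_0_compat|]; apply pow_lt || lra; lra. }
  intros u Hu Hr.
  assert (Hr1 : 1 <= Cmod u) by (apply Rmax_le_l, Rmax_le_l in Hr; auto).
  assert (HrB : Bq + 1 <= Cmod u) by (apply Rmax_le_r in Hr; auto).
  set (z := phi u). assert (Hq : Peval cq z = u) by (apply Hinv; auto).
  assert (Hz : T <= Cmod z).
  { destruct (Rle_lt_dec T (Cmod z)) as [L|L]; auto.
    exfalso. specialize (HB z ltac:(lra)). rewrite Hq in HB. lra. }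
  destruct (H z Hz) as (Hnq' & Hnq1 & Hnp' & Hk & [Hq1 Hq2] & HP).
  rewrite Hq in Hq1, Hq2.
  set (r := rho u). assert (Hr0 : 0 < r) by apply rho_pos.
  assert (Hrd : r ^ d = Cmod u) by (apply rho_pow; lra).
  set (a := Cmod z) in *.
  assert (Ha : 0 < a) by lra.
  assert (H2d : 2 <= 2 ^ d).
  { destruct d as [|d']; [lia|]. simpl. pose proof (pow_R1_Rle 2 d' ltac:(lra)). lra. }
  assert (E1 : (r / 2) ^ d = Cmod u / 2 ^ d) by (unfold Rdiv; rewrite Rpow_mult_distr, Hrd, pow_inv; reflexivity).
  assert (E2 : (2 * r) ^ d = 2 ^ d * Cmod u) by (rewrite Rpow_mult_distr, Hrd; reflexivity).
  assert (Hlow : r / 2 <= a).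
  { apply pow_le_inv; try lra. rewrite E1.
    apply Rle_trans with (Cmod u / 2).
    - unfold Rdiv. apply Rmult_le_compat_l; [lra|]. apply Rinv_le_contravar; lra.
    - lra. }
  assert (Hup : a <= 2 * r).
  { apply pow_le_inv; try lra. rewrite E2. nra. }
  split; [auto|]. split.
  - eapply Rle_trans; [exact Hk|]. unfold Qb. fold r.
    rewrite Rmult_assoc. apply Rmult_le_compat_l; auto.
    apply Rle_trans with ((2 * r) ^ m / (r / 2) ^ (2 * d)).
    + unfold Rdiv. apply Rmult_le_compat.
      * apply pow_le; lra.
      * left; apply Rinv_0_lt_compat, pow_lt; lra.
      * apply pow_incr; lra.
      * apply Rinv_le_contravar. apply pow_lt; lra. apply pow_incr; lra.
    + unfold Rdiv. rewrite !Rpow_mult_distr, !pow_inv. right. field. repeat split; try (apply pow_nonzero); lra.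
  - eapply Rle_trans; [| exact HP]. rewrite Rmult_assoc. apply Rmult_le_compat_l; [lra|].
    apply Rle_trans with ((r / 2) ^ m * (r / 2) / (2 * r) ^ d).
    + unfold Rdiv. rewrite !Rpow_mult_distr, !pow_inv. right. field. repeat split; try (apply pow_nonzero); lra.
    + unfold Rdiv. apply Rmult_le_compat.
      * apply Rmult_le_pos; [apply pow_le|]; lra.
      * left; apply Rinv_0_lt_compat, pow_lt; lra.
      * apply Rmult_le_compat; try lra. apply pow_le; lra. apply pow_incr; lra.
      * apply Rinv_le_contravar. apply pow_lt; lra. apply pow_incr; lra.
Qed.


Lemma Qb_path w u s : 1 <= Cmod w -> 0 <= s -> Cmod w / 3 <= Cmod u -> Cmod u <= Cmod w + 2 * s ->
  Qb u <= 3 ^ (2 * d) * (1 + 2 * s) ^ m * Qb w.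
Proof.
  intros Hw Hs H1 H2. unfold Qb, Qb.
  assert (Hu : 0 < Cmod u) by lra.
  pose proof (rho_pos u). pose proof (rho_pos w).
  pose proof (rho_pow u Hu) as Eu. pose proof (rho_pow w ltac:(lra)) as Ew.
  assert (U : rho u <= rho w * (1 + 2 * s)).
  { apply pow_le_inv; try nra. rewrite Rpow_mult_distr, Eu, Ew.
    apply Rle_trans with (Cmod w * (1 + 2 * s)). nra.
    apply Rmult_le_compat_l; [lra|]. destruct d as [|d']; [lia|]. simpl.
    rewrite <- (Rmult_1_r (1 + 2 * s)) at 1. apply Rmult_le_compat_l; [lra|]. apply pow_R1_Rle; lra. }
  assert (L : rho w / 3 <= rho u).
  { apply pow_le_inv; try lra. unfold Rdiv. rewrite Rpow_mult_distr, Eu, Ew, pow_inv.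
    apply Rle_trans with (Cmod w / 3); [|lra]. unfold Rdiv. apply Rmult_le_compat_l; [lra|].
    apply Rinv_le_contravar; [lra|]. destruct d as [|d']; [lia|]. simpl.
    rewrite <- (Rmult_1_r 3) at 1. apply Rmult_le_compat_l; [lra|]. apply pow_R1_Rle; lra. }
  apply Rle_trans with ((rho w * (1 + 2 * s)) ^ m / (rho w / 3) ^ (2 * d)).
  - unfold Rdiv. apply Rmult_le_compat.
    + apply pow_le; lra.
    + left; apply Rinv_0_lt_compat, pow_lt; lra.
    + apply pow_incr; lra.
    + apply Rinv_le_contravar. apply pow_lt; lra. apply pow_incr; lra.
  - unfold Rdiv. rewrite !Rpow_mult_distr, pow_inv. right. field. repeat split; try apply pow_nonzero; lra.
Qed.

Lemma ray r1 Ck : 1 <= r1 -> 0 <= Ck ->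
  (forall u, Gset Rr u -> r1 <= Cmod u -> Cmod (kf cp cq m d (phi u)) <= Ck * Qb u) ->
  exists K1, 0 <= K1 /\ forall w e S, Gset Rr w -> 3 * r1 <= Cmod w -> Re e = -1 -> Cmod e <= 2 -> 0 <= S ->
    (forall s, 0 <= s -> Gset Rr (w + RtoC s * e)%C /\ (Cmod w + s) / 3 <= Cmod (w + RtoC s * e)%C
        /\ Cmod (w + RtoC s * e)%C <= Cmod w + 2 * s) ->
    Cmod (Hf (w + RtoC S * e)%C - Hf w)%C <= K1 * exp (Re w) * Qb w.
Proof.
  intros Hr1 HCk Hb. destruct (exp_poly m) as [M [HM HMp]].
  exists (4 * Ck * 3 ^ (2 * d) * M). split.
  { apply Rmult_le_pos; [|lra]. apply Rmult_le_pos; [lra|]. apply pow_le; lra. }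
  intros w e S Hw Hw3 He He2 HS Hpath.
  pose proof (Qb_pos w) as HQ.
  set (A := 2 * Ck * 3 ^ (2 * d) * M * exp (Re w) * Qb w).
  assert (HA : 0 <= A).
  { unfold A. apply Rmult_le_pos; [|lra]. apply Rmult_le_pos; [|left; apply exp_pos].
    apply Rmult_le_pos; [|lra]. apply Rmult_le_pos; [lra|]. apply pow_le; lra. }
  replace (Hf w) with (Hf (w + RtoC 0 * e)%C) by (f_equal; ring).
  eapply Rle_trans.
  { apply (MVI (fun s => Hf (w + RtoC s * e)%C) (fun s => Cexp (w + RtoC s * e) * kf cp cq m d (phi (w + RtoC s * e)) * e)%C
      (fun s => - 2 * A * exp (- s / 2)) (fun s => A * exp (- s / 2)) 0 S HS).
    - intros s Hs. apply CD_line. apply CD_Hf; auto. apply Hpath; lra.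
    - intros s Hs. apply deriv_beta.
    - intros s Hs. destruct (Hpath s ltac:(lra)) as [HG [Hl Hu]].
      rewrite !Cmod_mult, Cmod_Cexp.
      assert (Hre : Re (w + RtoC s * e)%C = Re w - s).
      { destruct w, e; unfold Re, RtoC, Cplus, Cmult in *; simpl in *. rewrite He. ring. }
      rewrite Hre.
      assert (Hg : r1 <= Cmod (w + RtoC s * e)%C).
      { apply Rle_trans with ((Cmod w + s) / 3); auto. lra. }
      specialize (Hb _ HG Hg).
      assert (Hq : Qb (w + RtoC s * e)%C <= 3 ^ (2 * d) * (1 + 2 * s) ^ m * Qb w).
      { apply Qb_path; try lra. }
      specialize (HMp s ltac:(lra)).
      pose proof (Cmod_ge_0 (kf cp cq m d (phi (w + RtoC s * e)%C))).
      pose proof (Cmod_ge_0 e).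
      assert (E1 : exp (Re w - s) = exp (Re w) * exp (- s / 2) * exp (- s / 2)).
      { rewrite <- !exp_plus. f_equal. field. }
      assert (E2 : exp (- s / 2) * exp (s / 2) = 1).
      { rewrite <- exp_plus. replace (- s / 2 + s / 2) with 0 by field. apply exp_0. }
      pose proof (exp_pos (Re w)). pose proof (exp_pos (- s / 2)). pose proof (exp_pos (s/2)).
      assert (0 <= (1 + 2 * s) ^ m) by (apply pow_le; lra).
      assert (0 <= 3 ^ (2 * d)) by (apply pow_le; lra).
      apply Rle_trans with (exp (Re w - s) * (Ck * (3 ^ (2 * d) * (1 + 2 * s) ^ m * Qb w)) * 2).
      { apply Rmult_le_compat; try nra. apply Rmult_le_pos; [left; apply exp_pos| auto].
        apply Rmult_le_compat_l; [left; apply exp_pos|]. eapply Rle_trans; [exact Hb|]. apply Rmult_le_compat_l; auto. }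
      rewrite E1. unfold A.
      apply Rle_trans with (exp (Re w) * exp (- s / 2) * (exp (- s / 2) * (1 + 2 * s) ^ m) * (2 * Ck * 3 ^ (2 * d) * Qb w)).
      { right. ring. }
      apply Rle_trans with (exp (Re w) * exp (- s / 2) * M * (2 * Ck * 3 ^ (2 * d) * Qb w)).
      2:{ right. ring. }
      apply Rmult_le_compat_r. { apply Rmult_le_pos; [|lra]. apply Rmult_le_pos; lra. }
      apply Rmult_le_compat_l. { apply Rmult_le_pos; lra. }
      apply Rmult_le_reg_r with (exp (s / 2)); [lra|].
      assert (E3 : exp (- s / 2) * (1 + 2 * s) ^ m * exp (s / 2) = (1 + 2 * s) ^ m)
        by (transitivity ((exp (- s / 2) * exp (s / 2)) * (1 + 2 * s) ^ m); [ring| rewrite E2; ring]).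
      rewrite E3.
      lra. }
  replace (- 0 / 2) with 0 by field. rewrite exp_0.
  pose proof (exp_pos (- S / 2)).
  assert (2 * A = 4 * Ck * 3 ^ (2 * d) * M * exp (Re w) * Qb w) by (unfold A; ring).
  nra.
Qed.


Definition RayProp r1 K1 := forall w e S, Gset Rr w -> 3 * r1 <= Cmod w -> Re e = -1 -> Cmod e <= 2 -> 0 <= S ->
    (forall s, 0 <= s -> Gset Rr (w + RtoC s * e)%C /\ (Cmod w + s) / 3 <= Cmod (w + RtoC s * e)%C
        /\ Cmod (w + RtoC s * e)%C <= Cmod w + 2 * s) ->
    Cmod (Hf (w + RtoC S * e)%C - Hf w)%C <= K1 * exp (Re w) * Qb w.

Lemma Gset_negreal r1 x : Rr < r1 -> 1 <= r1 -> x <= - (3 * r1) -> Gset Rr (RtoC x).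
Proof.
  intros H1 H2 Hx. split.
  - rewrite Cmod_R, Rabs_left by lra. lra.
  - simpl. intros [_ H]. lra.
Qed.

Lemma neg_ray r1 K1 : 1 <= r1 -> Rr < r1 -> RayProp r1 K1 -> forall x S, x <= - (3 * r1) -> 0 <= S ->
  Cmod (Hf (RtoC (x - S)) - Hf (RtoC x))%C <= K1 * exp x * Qb (RtoC x).
Proof.
  intros H1 H2 HR' x S Hx HS.
  replace (RtoC (x - S)) with (RtoC x + RtoC S * RtoC (-1))%C by (rewrite RtoC_minus; ring).
  replace x with (Re (RtoC x)) at 2 by reflexivity.
  apply HR'; auto.
  - apply (Gset_negreal r1); auto.
  - rewrite Cmod_R, Rabs_left by lra. lra.
  - rewrite Cmod_R, Rabs_left by lra. lra.
  - intros s Hs. replace (RtoC x + RtoC s * RtoC (-1))%C with (RtoC (x - s)) by (rewrite RtoC_minus; ring).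
    rewrite !Cmod_R, !Rabs_left by lra. split; [apply (Gset_negreal r1); auto; lra|]. lra.
Qed.

Lemma tail_small r1 K1 : 1 <= r1 -> 0 <= K1 -> forall eps, 0 < eps -> exists X, X <= - (3 * r1) /\
  forall x, x <= X -> K1 * exp x * Qb (RtoC x) < eps.
Proof.
  intros H1 HK eps Heps. destruct (exp_poly m) as [M [HM HMp]].
  exists (Rmin (- (3 * r1)) (- 2 * (K1 * M + 1) / eps)). split; [apply Rmin_l|].
  intros x Hx.
  assert (Hx1 : x <= - (3 * r1)) by (eapply Rle_trans; [exact Hx| apply Rmin_l]).
  assert (Hx2 : x <= - 2 * (K1 * M + 1) / eps) by (eapply Rle_trans; [exact Hx| apply Rmin_r]).
  assert (Hc : Cmod (RtoC x) = - x) by (rewrite Cmod_R, Rabs_left by lra; reflexivity).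
  assert (Q1 : Qb (RtoC x) <= (- x) ^ m) by (rewrite <- Hc; apply Qb_le; lra).
  assert (Q2 : (- x) ^ m <= M * exp (- x / 2)).
  { eapply Rle_trans; [| apply HMp; lra]. apply pow_incr. lra. }
  pose proof (Qb_pos (RtoC x)).
  assert (E : exp x * exp (- x / 2) = exp (x / 2)) by (rewrite <- exp_plus; f_equal; field).
  assert (B1 : K1 * exp x * Qb (RtoC x) <= K1 * M * exp (x / 2)).
  { rewrite <- E. pose proof (exp_pos x). pose proof (exp_pos (- x / 2)).
    apply Rle_trans with (K1 * exp x * (M * exp (- x / 2))).
    - apply Rmult_le_compat_l; [apply Rmult_le_pos; lra| lra].
    - right; ring. }
  assert (B2 : exp (x / 2) * (1 - x / 2) <= 1).
  { pose proof (exp_ge_lin (- x / 2)).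
    assert (exp (x / 2) * exp (- x / 2) = 1) by (rewrite <- exp_plus; replace (x / 2 + - x / 2) with 0 by field; apply exp_0).
    pose proof (exp_pos (x / 2)). nra. }
  assert (B3 : (K1 * M + 1) / eps < 1 - x / 2).
  { assert (- 2 * (K1 * M + 1) / eps = - 2 * ((K1 * M + 1) / eps)) by (field; lra). lra. }
  assert (0 < (K1 * M + 1) / eps) by (apply Rdiv_lt_0_compat; nra).
  pose proof (exp_pos (x / 2)).
  assert (K1 * M * exp (x / 2) < eps).
  { apply Rle_lt_trans with ((K1 * M + 1) * exp (x / 2) - exp (x / 2)). nra.
    assert ((K1 * M + 1) * exp (x / 2) <= eps * (exp (x / 2) * (1 - x / 2))).
    { replace (K1 * M + 1) with (eps * ((K1 * M + 1) / eps)) by (field; lra).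
      rewrite Rmult_assoc. apply Rmult_le_compat_l; [lra|]. nra. }
    nra. }
  lra.
Qed.

Lemma Hf_limit r1 K1 : 1 <= r1 -> Rr < r1 -> 0 <= K1 -> RayProp r1 K1 ->
  exists cS, forall x, x <= - (3 * r1) -> Cmod (Hf (RtoC x) - cS)%C <= K1 * exp x * Qb (RtoC x).
Proof.
  intros H1 H2 HK HR'.
  set (xs := fun n : nat => - (3 * r1) - INR n).
  set (a := fun n => Hf (RtoC (xs n))).
  assert (Ha : forall n k, (n <= k)%nat -> Cmod (a k - a n)%C <= K1 * exp (xs n) * Qb (RtoC (xs n))).
  { intros n k Hnk. unfold a. replace (xs k) with (xs n - (INR k - INR n)) by (unfold xs; ring).
    apply (neg_ray r1); auto. unfold xs. pose proof (pos_INR n). lra.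
    apply le_INR in Hnk. lra. }
  assert (Hcauchy : forall eps, 0 < eps -> exists N, forall n k, (n >= N)%nat -> (k >= N)%nat -> Cmod (a n - a k)%C < eps).
  { intros eps Heps. destruct (tail_small r1 K1 H1 HK (eps / 2) ltac:(lra)) as [X [HX HXs]].
    destruct (INR_unbounded (- (3 * r1) - X)) as [N HN].
    exists N. intros n k Hn Hk.
    assert (HxN : xs N <= X) by (unfold xs; lra).
    specialize (HXs _ HxN).
    pose proof (Ha N n Hn). pose proof (Ha N k Hk).
    replace (a n - a k)%C with ((a n - a N) - (a k - a N))%C by ring.
    eapply Rle_lt_trans. { unfold Cminus at 1. eapply Rle_trans; [apply Cmod_triangle|]. rewrite Cmod_opp. apply Rle_refl. }
    lra. }
  assert (Cre : Cauchy_crit (fun n => Re (a n))).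
  { intros eps Heps. destruct (Hcauchy eps Heps) as [N HN]. exists N. intros n k Hn Hk.
    unfold Rdist. eapply Rle_lt_trans; [| apply (HN n k Hn Hk)]. rewrite <- Re_sub. apply Re_le_Cmod. }
  assert (Cim : Cauchy_crit (fun n => Im (a n))).
  { intros eps Heps. destruct (Hcauchy eps Heps) as [N HN]. exists N. intros n k Hn Hk.
    unfold Rdist. eapply Rle_lt_trans; [| apply (HN n k Hn Hk)]. rewrite <- Im_sub. apply Im_le_Cmod. }
  destruct (Rcomplete.R_complete _ Cre) as [lr Hlr].
  destruct (Rcomplete.R_complete _ Cim) as [li Hli].
  exists (lr, li). intros x Hx.
  apply Rle_plus_epsilon. intros eps Heps.
  destruct (Hlr (eps / 2) ltac:(lra)) as [N1 HN1].
  destruct (Hli (eps / 2) ltac:(lra)) as [N2 HN2].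
  destruct (INR_unbounded (- (3 * r1) - x)) as [N3 HN3].
  set (n := max N1 (max N2 N3)).
  assert (Hn1 : (n >= N1)%nat) by (unfold n; lia).
  assert (Hn2 : (n >= N2)%nat) by (unfold n; lia).
  assert (Hn3 : (n >= N3)%nat) by (unfold n; lia).
  specialize (HN1 n Hn1). specialize (HN2 n Hn2).
  assert (Hxn : xs n <= x).
  { unfold xs. apply le_INR in Hn3. lra. }
  assert (D1 : Cmod (a n - Hf (RtoC x))%C <= K1 * exp x * Qb (RtoC x)).
  { unfold a. replace (xs n) with (x - (x - xs n)) by ring. apply (neg_ray r1); auto. lra. }
  assert (D2 : Cmod (a n - (lr, li))%C < eps).
  { eapply Rle_lt_trans; [apply Cmod_le_sum|]. unfold Rdist in HN1, HN2.
    rewrite Re_sub, Im_sub. change (Re (lr, li)) with lr. change (Im (lr, li)) with li. lra. }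
  replace (Hf (RtoC x) - (lr, li))%C with ((a n - (lr, li)) - (a n - Hf (RtoC x)))%C by ring.
  unfold Cminus at 1. eapply Rle_trans; [apply Cmod_triangle|]. rewrite Cmod_opp. lra.
Qed.

Lemma lin_ReIm (w : C) (s a b : R) : Re (w + RtoC s * (a, b))%C = Re w + s * a /\ Im (w + RtoC s * (a, b))%C = Im w + s * b.
Proof. destruct w. unfold Re, Im, Cplus, Cmult, RtoC; simpl. split; ring. Qed.

Lemma seg_Re (x y : C) t : Re (x + RtoC t * (y - x))%C = Re x + t * (Re y - Re x).
Proof. destruct x, y. unfold Re, Cplus, Cmult, Cminus, Copp, RtoC; simpl. ring. Qed.

Lemma Cmod_ge_of_sq (z : C) t : 0 <= t -> t * t <= Re z * Re z + Im z * Im z -> t <= Cmod z.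
Proof.
  intros Ht H. pose proof (Cmod2_alt z). pose proof (Cmod_ge_0 z). simpl in H0. nra.
Qed.

Lemma general_w r1 Ck K1 cS : 1 <= r1 -> Rr < r1 -> 0 <= Ck -> 0 <= K1 ->
  (forall u, Gset Rr u -> r1 <= Cmod u -> Cmod (kf cp cq m d (phi u)) <= Ck * Qb u) ->
  RayProp r1 K1 ->
  (forall x, x <= - (3 * r1) -> Cmod (Hf (RtoC x) - cS)%C <= K1 * exp x * Qb (RtoC x)) ->
  forall w, Gset Rr w -> 3 * r1 <= Cmod w -> Cmod (Hf w - cS)%C <= K1 * exp (Re w) * Qb w.
Proof.
  intros H1 H2 HCk HK1 Hb HR' Hlim w Hw Hw3.
  set (tau := if Rle_dec 0 (Im w) then 1 else -1).
  assert (Htau : tau * tau = 1 /\ 0 <= tau * Im w).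
  { unfold tau. destruct (Rle_dec 0 (Im w)); split; nra. }
  destruct Htau as [Ht1 Ht2].
  set (e := ((-1)%R, tau) : C).
  assert (He : Re e = -1) by reflexivity.
  assert (He2 : Cmod e <= 2).
  { eapply Rle_trans; [apply Cmod_le_sum|]. change (Re e) with (-1). change (Im e) with tau.
    assert (Rabs (-1) = 1) by (rewrite Rabs_left; lra).
    assert (Rabs tau = 1) by (unfold tau; destruct (Rle_dec 0 (Im w)); [apply Rabs_R1| rewrite Rabs_left; lra]).
    lra. }
  pose proof (Re_le_Cmod w) as HRw. pose proof (Cmod2_alt w) as Hw2. simpl in Hw2.
  assert (Hpath : forall s, 0 <= s -> Gset Rr (w + RtoC s * e)%C /\ (Cmod w + s) / 3 <= Cmod (w + RtoC s * e)%C
        /\ Cmod (w + RtoC s * e)%C <= Cmod w + 2 * s).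
  { intros s Hs. destruct (lin_ReIm w s (-1) tau) as [ER EI]. fold e in ER, EI.
    assert (Hl : (Cmod w + s) / 3 <= Cmod (w + RtoC s * e)%C).
    { apply Cmod_ge_of_sq. pose proof (Cmod_ge_0 w); lra.
      rewrite ER, EI. apply Rabs_le_between in HRw. pose proof (Cmod_ge_0 w).
      set (W := Cmod w) in *. set (x := Re w) in *. set (y := Im w) in *.
      assert (Q1 : s * x <= s * W) by (apply Rmult_le_compat_l; lra).
      assert (Q2 : 0 <= s * (tau * y)) by (apply Rmult_le_pos; lra).
      assert (Q3 : 0 <= (W - 5 / 4 * s) * (W - 5 / 4 * s)) by (pose proof (Rle_0_sqr (W - 5 / 4 * s)); unfold Rsqr in *; lra).
      assert (Q4 : W * W = x * x + y * y) by lra.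
      assert (Q5 : 0 <= s * s) by (pose proof (Rle_0_sqr s); unfold Rsqr in *; lra).
      assert (E : (x + s * -1) * (x + s * -1) + (y + s * tau) * (y + s * tau)
                 = W * W - 2 * (s * x) + 2 * (s * (tau * y)) + s * s * (tau * tau) + s * s) by (rewrite Q4; ring).
      rewrite E, Ht1. nra. }
    split; [|split; auto].
    - split. { pose proof (Cmod_ge_0 w). lra. }
      intros [Hi Hr]. rewrite EI in Hi. rewrite ER in Hr.
      destruct Hw as [_ Hw']. apply Hw'. unfold tau in Hi. destruct (Rle_dec 0 (Im w)).
      + split; lra.
      + lra.
    - eapply Rle_trans; [apply Cmod_triangle|]. rewrite Cmod_mult, Cmod_R, Rabs_pos_eq by lra. nra. }
  apply Rle_plus_epsilon. intros eps Heps.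
  destruct (exp_poly (S m)) as [M' [HM' HM'p]].
  set (Cw := (Ck + K1) * exp (Re w) * (1 + Cmod w) ^ (S m) * M').
  assert (HCw : 0 <= Cw).
  { unfold Cw. apply Rmult_le_pos; [|lra]. apply Rmult_le_pos; [apply Rmult_le_pos; [lra| left; apply exp_pos]|].
    apply pow_le. pose proof (Cmod_ge_0 w). lra. }
  set (Sv := Rmax (Re w + 3 * r1) 0 + 2 * Cw / eps + 1).
  assert (HS0 : 0 <= Sv). { unfold Sv. pose proof (Rmax_r (Re w + 3 * r1) 0). assert (0 <= 2 * Cw / eps) by (apply Rdiv_le_0_compat; lra). lra. }
  assert (HxS : Re w - Sv <= - (3 * r1)). { unfold Sv. pose proof (Rmax_l (Re w + 3 * r1) 0). assert (0 <= 2 * Cw / eps) by (apply Rdiv_le_0_compat; lra). lra. }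
  assert (HSc : Cw / eps <= Sv / 2). { unfold Sv. pose proof (Rmax_r (Re w + 3 * r1) 0). unfold Rdiv. lra. }
  set (wS := (w + RtoC Sv * e)%C).
  set (xS := Re w - Sv).
  destruct (lin_ReIm w Sv (-1) tau) as [ERS EIS]. fold e wS in ERS, EIS.
  assert (HwS : Re wS = xS) by (rewrite ERS; unfold xS; ring).
  destruct (Hpath Sv HS0) as [GwS [LwS UwS]]. fold wS in GwS, LwS, UwS.
  assert (P1 : Cmod (Hf wS - Hf w)%C <= K1 * exp (Re w) * Qb w) by (apply HR'; auto).
  set (L := Cmod w + 2 * Sv).
  assert (HL1 : 1 <= L) by (unfold L; lra).
  assert (HxSL : - xS <= L).
  { pose proof (Re_le_Cmod wS). rewrite HwS in H. apply Rabs_le_between in H. unfold L. lra. }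
  assert (P2 : Cmod (Hf wS - Hf (RtoC xS))%C <= exp xS * Ck * L ^ m * L).
  { eapply Rle_trans.
    { apply (seg_MVI Hf (fun u => Cexp u * kf cp cq m d (phi u))%C (RtoC xS) wS (exp xS * Ck * L ^ m)).
      - intros t Ht. apply CD_Hf.
        assert (HRe : Re (RtoC xS + RtoC t * (wS - RtoC xS))%C = xS) by (rewrite seg_Re, HwS; simpl; ring).
        split.
        + pose proof (Re_le_Cmod (RtoC xS + RtoC t * (wS - RtoC xS))%C). rewrite HRe in H.
          rewrite Rabs_left in H by lra. lra.
        + intros [_ Hr]. rewrite HRe in Hr. lra.
      - intros t Ht. set (pt := (RtoC xS + RtoC t * (wS - RtoC xS))%C).
        assert (HRe : Re pt = xS) by (unfold pt; rewrite seg_Re, HwS; simpl; ring).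
        assert (Hpt1 : 3 * r1 <= Cmod pt).
        { pose proof (Re_le_Cmod pt). rewrite HRe in H. rewrite Rabs_left in H by lra. lra. }
        assert (Hpt2 : Cmod pt <= L).
        { unfold pt. eapply Rle_trans. apply Cmod_convex with (rho := Cmod wS); auto.
          rewrite Cmod_R. rewrite <- HwS. apply Re_le_Cmod. lra. unfold L. lra. }
        assert (Gpt : Gset Rr pt). { split. lra. intros [_ Hr]. rewrite HRe in Hr. lra. }
        rewrite Cmod_mult, Cmod_Cexp, HRe.
        pose proof (exp_pos xS).
        rewrite Rmult_assoc. apply Rmult_le_compat_l; [lra|].
        eapply Rle_trans; [apply (Hb pt Gpt); lra|].
        apply Rmult_le_compat_l; auto. eapply Rle_trans; [apply Qb_le; lra|]. apply pow_incr. split; [apply Cmod_ge_0| auto]. }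
    apply Rmult_le_compat_l.
    { apply Rmult_le_pos; [apply Rmult_le_pos; [left; apply exp_pos| auto]| apply pow_le; lra]. }
    eapply Rle_trans; [apply Cmod_le_sum|]. rewrite Re_sub, Im_sub, HwS. change (Re (RtoC xS)) with xS. change (Im (RtoC xS)) with 0.
    replace (xS - xS) with 0 by ring. rewrite Rabs_R0. replace (Im wS - 0) with (Im wS) by ring.
    rewrite Rplus_0_l. eapply Rle_trans; [apply Im_le_Cmod|]. unfold L. lra. }
  assert (P3 : Cmod (Hf (RtoC xS) - cS)%C <= K1 * exp xS * L ^ m).
  { eapply Rle_trans; [apply Hlim; unfold xS; lra|]. apply Rmult_le_compat_l.
    apply Rmult_le_pos; [lra| left; apply exp_pos].
    eapply Rle_trans; [apply Qb_le|]. rewrite Cmod_R, Rabs_left by lra. lra.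
    apply pow_incr. rewrite Cmod_R, Rabs_left by lra. split; lra. }
  assert (Hsmall : exp xS * Ck * L ^ m * L + K1 * exp xS * L ^ m <= Cw * exp (- Sv / 2)).
  { assert (A1 : L ^ m <= L ^ (S m)) by (simpl; rewrite <- (Rmult_1_l (L ^ m)) at 1; apply Rmult_le_compat_r; [apply pow_le; lra| lra]).
    assert (A2 : L ^ (S m) <= (1 + Cmod w) ^ (S m) * (M' * exp (Sv / 2))).
    { eapply Rle_trans with ((1 + Cmod w) ^ (S m) * (1 + 2 * Sv) ^ (S m)).
      - rewrite <- Rpow_mult_distr. apply pow_incr. split; [lra|].
        unfold L. pose proof (Cmod_ge_0 w). nra.
      - apply Rmult_le_compat_l. apply pow_le; pose proof (Cmod_ge_0 w); lra. apply HM'p; lra. }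
    assert (A3 : exp xS = exp (Re w) * exp (- Sv / 2) * exp (- Sv / 2)).
    { unfold xS. rewrite <- !exp_plus. f_equal. field. }
    assert (A4 : exp (- Sv / 2) * exp (Sv / 2) = 1).
    { rewrite <- exp_plus. replace (- Sv / 2 + Sv / 2) with 0 by field. apply exp_0. }
    pose proof (exp_pos xS). pose proof (exp_pos (Re w)). pose proof (exp_pos (- Sv / 2)). pose proof (exp_pos (Sv / 2)).
    assert (0 <= L ^ m) by (apply pow_le; lra).
    apply Rle_trans with ((Ck + K1) * exp xS * L ^ (S m)).
    { replace (L ^ (S m)) with (L ^ m * L) by (simpl; ring).
      assert (K1 * exp xS * L ^ m <= K1 * exp xS * (L ^ m * L)).
      { apply Rmult_le_compat_l; [apply Rmult_le_pos; lra|]. rewrite <- (Rmult_1_r (L ^ m)) at 1. apply Rmult_le_compat_l; lra. }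
      nra. }
    apply Rle_trans with ((Ck + K1) * exp xS * ((1 + Cmod w) ^ (S m) * (M' * exp (Sv / 2)))).
    { apply Rmult_le_compat_l; auto. apply Rmult_le_pos; lra. }
    rewrite A3. unfold Cw.
    right. transitivity ((Ck + K1) * exp (Re w) * (1 + Cmod w) ^ S m * M' * exp (- Sv / 2) * (exp (- Sv / 2) * exp (Sv / 2))).
    ring. rewrite A4. ring. }
  assert (Hsm2 : Cw * exp (- Sv / 2) < eps).
  { pose proof (exp_ge_lin (Sv / 2)).
    assert (A4 : exp (- Sv / 2) * exp (Sv / 2) = 1).
    { rewrite <- exp_plus. replace (- Sv / 2 + Sv / 2) with 0 by field. apply exp_0. }
    pose proof (exp_pos (- Sv / 2)).
    assert (Cw <= eps * (Sv / 2)).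
    { apply Rmult_le_reg_r with (/ eps). apply Rinv_0_lt_compat; lra.
      replace (eps * (Sv / 2) * / eps) with (Sv / 2) by (field; lra). unfold Rdiv in HSc. lra. }
    nra. }
  replace (Hf w - cS)%C with ((Hf w - Hf wS) + (Hf wS - Hf (RtoC xS)) + (Hf (RtoC xS) - cS))%C by ring.
  eapply Rle_trans; [apply Cmod_tri3|].
  rewrite <- Cmod_opp in P1. replace (- (Hf wS - Hf w))%C with (Hf w - Hf wS)%C in P1 by ring.
  lra.
Qed.

Lemma final_sec : exists cS K r0, forall w, Gset Rr w -> r0 <= Cmod w ->
  exists E, Cmod E <= K * Rpower (Cmod w) (-1 - / INR d) /\
    gf (phi w) = (cS + Peval cp (phi w) / Peval (Pderiv cq) (phi w) * (1 + lamC m d / w + E) * Cexp w)%C.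
Proof.
  destruct bounds as [r1 [Ck [cP [Hr1 [Hr1R [HCk [HcP HB]]]]]]].
  assert (Hk : forall u, Gset Rr u -> r1 <= Cmod u -> Cmod (kf cp cq m d (phi u)) <= Ck * Qb u)
    by (intros u Hu Hu1; apply HB; auto).
  destruct (ray r1 Ck Hr1 HCk Hk) as [K1 [HK1 Hray]].
  destruct (Hf_limit r1 K1 Hr1 Hr1R HK1 Hray) as [cS HcS].
  exists cS, (K1 / cP), (3 * r1).
  intros w Hw Hw3.
  assert (Hmain := general_w r1 Ck K1 cS Hr1 Hr1R HCk HK1 Hk Hray HcS w Hw Hw3).
  destruct (HB w Hw ltac:(lra)) as [Hp [_ HP]].
  assert (Hq1 := q1_nz w Hw).
  assert (HPnz : Pf cp cq (phi w) <> RtoC 0).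
  { intro E. rewrite E, Cmod_0 in HP. pose proof (rho_pos w).
    assert (0 < cP * (rho w ^ m * rho w / rho w ^ d)).
    { apply Rmult_lt_0_compat; auto. apply Rdiv_lt_0_compat; [apply Rmult_lt_0_compat; [apply pow_lt|]|apply pow_lt]; lra. }
    lra. }
  pose proof (Cexp_nz w) as Hew.
  exists ((Hf w - cS) / (Pf cp cq (phi w) * Cexp w))%C. split.
  - rewrite Cmod_div by (apply Cmult_neq_0; auto). rewrite Cmod_mult, Cmod_Cexp.
    assert (Hw1 : 0 < Cmod w) by lra.
    set (r := rho w) in *. assert (Hr : 0 < r) by apply rho_pos.
    assert (Hrd : r ^ d = Cmod w) by (apply rho_pow; auto).
    assert (Erp : Rpower (Cmod w) (-1 - / INR d) = / (r ^ d * r)).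
    { replace (-1 - / INR d) with (- (1 + / INR d)) by ring. rewrite Rpower_Ropp, Rpower_plus, Rpower_1 by auto.
      rewrite Hrd. reflexivity. }
    rewrite Erp. unfold Qb in Hmain. fold r in Hmain.
    pose proof (exp_pos (Re w)).
    assert (0 < cP * (r ^ m * r / r ^ d)).
    { apply Rmult_lt_0_compat; auto. apply Rdiv_lt_0_compat; [apply Rmult_lt_0_compat; [apply pow_lt|]|apply pow_lt]; lra. }
    apply Rle_trans with (K1 * exp (Re w) * (r ^ m / r ^ (2 * d)) / (cP * (r ^ m * r / r ^ d) * exp (Re w))).
    + unfold Rdiv at 1 3. apply Rmult_le_compat; auto using Cmod_ge_0.
      * left. apply Rinv_0_lt_compat. apply Rmult_lt_0_compat; [apply Cmod_gt_0|]; auto.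
      * apply Rinv_le_contravar. apply Rmult_lt_0_compat; auto. apply Rmult_le_compat_r; lra.
    + right. replace (r ^ (2 * d)) with (r ^ d * r ^ d) by (rewrite <- pow_add; f_equal; lia).
      field. repeat split; try apply pow_nonzero; lra.
  - pose proof (u_nz w Hw). unfold Hf, Pf in *. field. repeat split; auto.
Qed.

End Main.

Open Scope R_scope.


Open Scope C_scope.

Theorem lemma4p1
  (cp cq : list C) (m d : nat) (c : C) (Rr : R) (phi : C -> C) (x0 : C) :
  length cp = S m -> nth m cp (RtoC 0) = RtoC (INR d) ->
  (1 <= d)%nat -> length cq = S d -> nth d cq (RtoC 0) = RtoC 1 ->
  (0 < Rr)%R ->
  (forall z, Peval (Pderiv cq) z = RtoC 0 -> (Cmod (Peval cq z) < Rr)%R) ->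
  (forall z, (/2 * Rpower Rr (/ INR d) <= Cmod z)%R ->
     ((/2) ^ d * Cmod z ^ d <= Cmod (Peval cq z) <= 2 ^ d * Cmod z ^ d)%R) ->
  let p := Peval cp in
  let q := Peval cq in
  let q' := Peval (Pderiv cq) in
  let g := fun z => seg_integral (fun t => p t * Cexp (q t)) z + c in
  let lam := RtoC ((INR d - 1 - INR m) / INR d) in
  let G := fun w : C => (Rr < Cmod w)%R /\ ~ (Im w = 0%R /\ (0 <= Re w)%R) in
  G (q x0) ->
  let S := component (fun z => G (q z)) x0 in
  (forall w, G w -> continuous phi w) ->
  (forall w, G w -> q (phi w) = w) ->
  (forall z, S z <-> exists w, G w /\ phi w = z) ->
  exists (cS : C) (K r0 : R),
    forall w, G w -> (r0 <= Cmod w)%R ->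
      exists E : C,
        (Cmod E <= K * Rpower (Cmod w) (-1 - / INR d))%R /\
        g (phi w) = cS + p (phi w) / q' (phi w) * (1 + lam / w + E) * Cexp w.
Proof.
  intros Hlp Hnp Hd Hlq Hnq HR Hcrit _ p q q' g lam G _ S Hcont Hinv _.
  exact (final_sec cp cq m d c Rr phi Hlp Hnp Hd Hlq Hnq HR Hcrit Hcont Hinv).
Qed.
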